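(* Let $D^k$ be a vertically mapped wedge with $J^k>0$. Define the weak differentiation matrices $(\bm S^k_x)_{ij,i'j'}=\int_{\widehat W}\frac{\partial\phi_{i'j'}}{\partial x}\,\ell_{ij}\,J^k$ and $(\bm S^k_y)_{ij,i'j'}=\int_{\widehat W}\frac{\partial\phi_{i'j'}}{\partial y}\,\ell_{ij}\,J^k$, where $\phi_{i'j'}=\ell_{i'j'}\circ(\bm\Phi^k)^{-1}$ and the $x$-,$y$-derivatives are expressed via the chain rule in reference coordinates, and let $\bm D^k_x=(\bm M^k)^{-1}\bm S^k_x$, $\bm D^k_y=(\bm M^k)^{-1}\bm S^k_y$. Then $$\bm D^k_x=\big(r_x\bm D^{\mathrm{tri}}_r+s_x\bm D^{\mathrm{tri}}_s\big)\otimes\bm I_{N+1}+\bm L^{\mathrm{tri},k}\otimes\mathrm{diag}(t_xJ^k)\,\bm D^{\mathrm{1D}}_t,$$ $$\bm D^k_y=\big(r_y\bm D^{\mathrm{tri}}_r+s_y\bm D^{\mathrm{tri}}_s\big)\otimes\bm I_{N+1}+\bm L^{\mathrm{tri},k}\otimes\mathrm{diag}(t_yJ^k)\,\bm D^{\mathrm{1D}}_t,$$ where $r_x,s_x,r_y,s_y$ are the (constant) geometric factors of $D^k$, $\mathrm{diag}(t_xJ^k)$ (resp. $\mathrm{diag}(t_yJ^k)$) is the $(N+1)\times(N+1)$ diagonal matrix with entries $(t_xJ^k)(t_j)$ (resp. $(t_yJ^k)(t_j)$), $j=0,\dots,N$ (these quantities depend only on $t$), and $\bm L^{\mathrm{tri},k}=(\bm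 M^{\mathrm{tri},k})^{-1}\widehat{\bm M}^{\mathrm{tri}}$.
   Context: Reference wedge $\widehat W=\widehat T\times[0,1]$ with $\widehat T=\{(r,s):r,s\ge0,\ r+s\le1\}$. Vertex functions $v_1=(1-r-s)(1-t)$, $v_2=r(1-t)$, $v_3=s(1-t)$, $v_4=(1-r-s)t$, $v_5=rt$, $v_6=st$; a wedge $D^k$ is the image of $\widehat W$ under $\bm{\Phi}^k=\sum_{i=1}^6\bm{\nu}_iv_i$ with vertices $\bm{\nu}_i\in\mathbb{R}^3$, $(x,y,z)=\bm\Phi^k(r,s,t)$, and $J^k=\det[\partial_r\bm{\Phi}^k,\partial_s\bm{\Phi}^k,\partial_t\bm{\Phi}^k]$. It is vertically mapped if the pairs $(\bm{\nu}_1,\bm{\nu}_4)$, $(\bm{\nu}_2,\bm{\nu}_5)$, $(\bm{\nu}_3,\bm{\nu}_6)$ each have identical $x$- and $y$-coordinates. Geometric factors $r_x=\partial r/\partial x$, $t_x=\partial t/\partial x$, etc., are entries of the inverse Jacobian matrix of $\bm\Phi^k$. Nodal basis: fix $N\ge1$, points $(r_i,s_i)$, $i=1,\dots,(N+1)(N+2)/2$, in $\widehat T$ unisolvent for polynomials of total degree $\le N$ with Lagrange basis $\ell^{\mathrm{tri}}_i$, and Gauss–Legendre–Lobatto points $0=t_0<\dots<t_N=1$ with Lagrange basis $\ell^{\mathrm{1D}}_j$; $\ell_{ij}=\ell^{\mathrm{tri}}_i(r,s)\ell^{\mathrm{1D}}_j(t)$. Matrices indexed by $(i,j)$ are ordered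 with $i$ the slow index, so $(\bm A\otimes\bm B)_{ij,i'j'}=\bm A_{ii'}\bm B_{jj'}$. Definitions: $(\bm M^k)_{ij,i'j'}=\int_{\widehat W}\ell_{ij}\ell_{i'j'}J^k$; $(\bm M^{\mathrm{tri},k})_{ii'}=\int_{\widehat T}\ell^{\mathrm{tri}}_i\ell^{\mathrm{tri}}_{i'}J^k(r,s)$ (where $J^k$ is independent of $t$ for vertically mapped wedges); $(\widehat{\bm M}^{\mathrm{tri}})_{ii'}=\int_{\widehat T}\ell^{\mathrm{tri}}_i\ell^{\mathrm{tri}}_{i'}$; nodal differentiation matrices $(\bm D^{\mathrm{tri}}_r)_{ii'}=\partial_r\ell^{\mathrm{tri}}_{i'}(r_i,s_i)$, $(\bm D^{\mathrm{tri}}_s)_{ii'}=\partial_s\ell^{\mathrm{tri}}_{i'}(r_i,s_i)$, $(\bm D^{\mathrm{1D}}_t)_{jj'}=(\ell^{\mathrm{1D}}_{j'})'(t_j)$; $\bm I_{N+1}$ is the $(N+1)\times(N+1)$ identity. *)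

(* Defs.v *)
From Stdlib Require Import Reals List Arith ClassicalEpsilon.
Open Scope R_scope.

Definition deriv (f : R -> R) (x : R) : R :=
  epsilon (inhabits 0) (fun l => derivable_pt_lim f x l).

Definition Rint (f : R -> R) (a b : R) : R :=
  epsilon (inhabits 0) (fun I => exists pr : Riemann_integrable f a b, RiemannInt pr = I).

Definition intT (g : R -> R -> R) : R :=
  Rint (fun r => Rint (fun s => g r s) 0 (1 - r)) 0 1.

Definition intW (f : R -> R -> R -> R) : R :=
  Rint (fun r => Rint (fun s => Rint (fun t => f r s t) 0 1) 0 (1 - r)) 0 1.

Definition d_r (f : R -> R -> R -> R) (r s t : R) : R := deriv (fun u => f u s t) r.
Definition d_s (f : R -> R -> R -> R) (r s t : R) : R := deriv (fun u => f r u t) s.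
Definition d_t (f : R -> R -> R -> R) (r s t : R) : R := deriv (fun u => f r s u) t.

Definition msum {I : Type} (l : list I) (f : I -> R) : R :=
  fold_right (fun i acc => f i + acc) 0 l.

Definition mmul {I : Type} (l : list I) (A B : I -> I -> R) : I -> I -> R :=
  fun i k => msum l (fun j => A i j * B j k).

Definition idm {I : Type} (eqd : forall x y : I, {x = y} + {x <> y}) : I -> I -> R :=
  fun i k => if eqd i k then 1 else 0.

Definition is_inv {I : Type} (l : list I) (eqd : forall x y : I, {x = y} + {x <> y})
  (A B : I -> I -> R) : Prop :=
  forall i k, In i l -> In k l ->
    mmul l A B i k = idm eqd i k /\ mmul l B A i k = idm eqd i k.

Definition minv {I : Type} (l : list I) (eqd : forall x y : I, {x = y} + {x <> y})
  (A : I -> I -> R) : I -> I -> R :=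
  epsilon (inhabits (fun _ _ => 0)) (fun B => is_inv l eqd A B).

Definition idx1 (n : nat) : list nat := seq 0 n.
Definition idx2 (n m : nat) : list (nat * nat) := list_prod (seq 0 n) (seq 0 m).

Definition pair_eq_dec : forall x y : nat * nat, {x = y} + {x <> y}.
Proof. decide equality; apply Nat.eq_dec. Defined.

Definition kron (A B : nat -> nat -> R) : nat * nat -> nat * nat -> R :=
  fun p q => A (fst p) (fst q) * B (snd p) (snd q).

Definition vfun (i : nat) (r s t : R) : R :=
  match i with
  | 1%nat => (1 - r - s) * (1 - t)
  | 2%nat => r * (1 - t)
  | 3%nat => s * (1 - t)
  | 4%nat => (1 - r - s) * t
  | 5%nat => r * t
  | 6%nat => s * t
  | _ => 0
  end.

(* nu i c : coordinate c (0 = x, 1 = y, 2 = z) of vertex nu_i, i = 1..6 *)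
Definition Phi (nu : nat -> nat -> R) (c : nat) (r s t : R) : R :=
  nu 1%nat c * vfun 1 r s t + nu 2%nat c * vfun 2 r s t + nu 3%nat c * vfun 3 r s t
  + nu 4%nat c * vfun 4 r s t + nu 5%nat c * vfun 5 r s t + nu 6%nat c * vfun 6 r s t.

Definition vertically_mapped (nu : nat -> nat -> R) : Prop :=
  nu 1%nat 0%nat = nu 4%nat 0%nat /\ nu 1%nat 1%nat = nu 4%nat 1%nat /\
  nu 2%nat 0%nat = nu 5%nat 0%nat /\ nu 2%nat 1%nat = nu 5%nat 1%nat /\
  nu 3%nat 0%nat = nu 6%nat 0%nat /\ nu 3%nat 1%nat = nu 6%nat 1%nat.

(* Jacobian matrix: row c = physical coordinate (x,y,z), column b = reference
   variable (r,s,t); i.e. columns are d_r Phi, d_s Phi, d_t Phi *)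
Definition Jmat (nu : nat -> nat -> R) (r s t : R) : nat -> nat -> R :=
  fun c b =>
    match b with
    | 0%nat => d_r (Phi nu c) r s t
    | 1%nat => d_s (Phi nu c) r s t
    | _ => d_t (Phi nu c) r s t
    end.

Definition det3 (A : nat -> nat -> R) : R :=
  A 0%nat 0%nat * (A 1%nat 1%nat * A 2%nat 2%nat - A 1%nat 2%nat * A 2%nat 1%nat)
  - A 0%nat 1%nat * (A 1%nat 0%nat * A 2%nat 2%nat - A 1%nat 2%nat * A 2%nat 0%nat)
  + A 0%nat 2%nat * (A 1%nat 0%nat * A 2%nat 1%nat - A 1%nat 1%nat * A 2%nat 0%nat).

Definition Jac (nu : nat -> nat -> R) (r s t : R) : R := det3 (Jmat nu r s t).

(* geometric factors: entries of the inverse Jacobian matrix;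
   gfac nu b c = d(reference var b)/d(physical coord c), e.g.
   r_x = gfac 0 0, s_x = gfac 1 0, t_x = gfac 2 0, r_y = gfac 0 1, s_y = gfac 1 1,
   t_y = gfac 2 1 *)
Definition gfac (nu : nat -> nat -> R) (b c : nat) (r s t : R) : R :=
  minv (idx1 3) Nat.eq_dec (Jmat nu r s t) b c.

Definition in_W (r s t : R) : Prop := 0 <= r /\ 0 <= s /\ r + s <= 1 /\ 0 <= t <= 1.

Definition is_polyN (N : nat) (f : R -> R -> R) : Prop :=
  exists c : nat -> nat -> R, forall r s,
    f r s = sum_f_R0 (fun a => sum_f_R0 (fun b => c a b * r ^ a * s ^ b) (N - a)) N.

Definition Ntri (N : nat) : nat := ((N + 1) * (N + 2) / 2)%nat.

Fixpoint legendre (n : nat) (x : R) : R :=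
  match n with
  | O => 1
  | S m =>
    match m with
    | O => x
    | S k => ((2 * INR k + 3) * x * legendre m x - (INR k + 1) * legendre k x) / (INR k + 2)
    end
  end.

(* tn 0 < ... < tn N are the N+1 Gauss-Legendre-Lobatto points mapped to [0,1]:
   endpoints 0, 1 and the interior points are the roots of P_N' (mapped by x = 2t-1) *)
Definition is_GLL (N : nat) (tn : nat -> R) : Prop :=
  tn 0%nat = 0 /\ tn N = 1 /\
  (forall j, (j < N)%nat -> tn j < tn (S j)) /\
  (forall j, (0 < j)%nat -> (j < N)%nat -> deriv (legendre N) (2 * tn j - 1) = 0).

Definition lag1D (N : nat) (tn : nat -> R) (j : nat) (t : R) : R :=
  fold_right (fun m acc => (if Nat.eq_dec m j then 1 else (t - tn m) / (tn j - tn m)) * acc)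
    1 (seq 0 (S N)).

(* Main.v *)
Require Import Defs.
From Stdlib Require Import Reals List Arith Lra Lia ClassicalEpsilon FunctionalExtensionality Classical.
From Coquelicot Require Import Coquelicot.
Open Scope R_scope.

Lemma msum_nil {I} (f : I -> R) : msum nil f = 0.
Proof. reflexivity. Qed.
Lemma msum_cons {I} a l (f : I -> R) : msum (a :: l) f = f a + msum l f.
Proof. reflexivity. Qed.
Lemma msum_app {I} l1 l2 (f : I -> R) : msum (l1 ++ l2) f = msum l1 f + msum l2 f.
Proof. induction l1; simpl; [ring|rewrite IHl1; ring]. Qed.
Lemma msum_map {I J} (g : I -> J) l (f : J -> R) : msum (map g l) f = msum l (fun i => f (g i)).
Proof. induction l; simpl; [ring|rewrite IHl; ring]. Qed.
Lemma msum_ext {I} l (f g : I -> R) : (forall i, In i l -> f i = g i) -> msum l f = msum l g.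
Proof. induction l; simpl; intros H; [ring|]. rewrite H, IHl; auto. Qed.
Lemma msum_plus {I} l (f g : I -> R) : msum l (fun i => f i + g i) = msum l f + msum l g.
Proof. induction l; simpl; [ring|rewrite IHl; ring]. Qed.
Lemma msum_scal {I} l c (f : I -> R) : msum l (fun i => c * f i) = c * msum l f.
Proof. induction l; simpl; [ring|rewrite IHl; ring]. Qed.
Lemma msum_scalr {I} l c (f : I -> R) : msum l (fun i => f i * c) = msum l f * c.
Proof. induction l; simpl; [ring|rewrite IHl; ring]. Qed.
Lemma msum_zero {I} l (f : I -> R) : (forall i, In i l -> f i = 0) -> msum l f = 0.
Proof. induction l; simpl; intros H; [ring|]. rewrite H, IHl; auto; ring. Qed.
Lemma msum_swap {I J} (l : list I) (l' : list J) f :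
  msum l (fun i => msum l' (fun j => f i j)) = msum l' (fun j => msum l (fun i => f i j)).
Proof.
  induction l; simpl.
  - symmetry; apply msum_zero; auto.
  - rewrite IHl, <- msum_plus. reflexivity.
Qed.
Lemma msum_prod {I J} (l : list I) (l' : list J) f :
  msum (list_prod l l') f = msum l (fun i => msum l' (fun j => f (i, j))).
Proof.
  induction l; simpl; [reflexivity|]. rewrite msum_app, msum_map, IHl. reflexivity.
Qed.
Lemma msum_mult {I J} (l : list I) (l' : list J) f g :
  msum l f * msum l' g = msum (list_prod l l') (fun p => f (fst p) * g (snd p)).
Proof.
  rewrite msum_prod, <- msum_scalr. apply msum_ext; intros i _.
  simpl. rewrite <- msum_scal. reflexivity.
Qed.

Lemma msum_delta {I} (eqd : forall x y : I, {x = y} + {x <> y}) l i (f : I -> R) :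
  NoDup l -> In i l -> msum l (fun j => (if eqd i j then 1 else 0) * f j) = f i.
Proof.
  induction l as [|a l IH]; simpl; intros Hnd Hin; [contradiction|].
  inversion Hnd; subst. destruct (eqd i a) as [e|ne].
  - subst. rewrite msum_zero. ring. intros j Hj. destruct (eqd a j); [subst; contradiction|ring].
  - destruct Hin as [Hin|Hin]; [congruence|]. rewrite IH; auto; ring.
Qed.
Lemma msum_delta' {I} (eqd : forall x y : I, {x = y} + {x <> y}) l i (f : I -> R) :
  NoDup l -> In i l -> msum l (fun j => f j * (if eqd j i then 1 else 0)) = f i.
Proof.
  intros. rewrite <- (msum_delta eqd l i f); auto. apply msum_ext; intros j _.
  destruct (eqd j i), (eqd i j); subst; try ring; congruence.
Qed.

Lemma NoDup_prod {I J} (l : list I) (l' : list J) : NoDup l -> NoDup l' -> NoDup (list_prod l l').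
Proof.
  induction l as [|a l IH]; simpl; intros H1 H2; [constructor|].
  inversion H1; subst. apply NoDup_app; auto.
  - apply NoDup_map_NoDup_ForallPairs; auto. intros x y _ _ E; congruence.
  - intros [x y] Hx Hy. apply in_map_iff in Hx. destruct Hx as [z [E _]]. inversion E; subst.
    apply in_prod_iff in Hy. tauto.
Qed.

Lemma mmul_assoc {I} (l : list I) A B C i k :
  mmul l (mmul l A B) C i k = mmul l A (mmul l B C) i k.
Proof.
  unfold mmul. transitivity (msum l (fun j => msum l (fun m => A i m * B m j * C j k))).
  - apply msum_ext; intros. rewrite <- msum_scalr. reflexivity.
  - rewrite msum_swap. apply msum_ext; intros. rewrite <- msum_scal. apply msum_ext; intros; ring.
Qed.



Lemma mmul_idl {I} (l : list I) eqd A i k : NoDup l -> In i l -> mmul l (idm eqd) A i k = A i k.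
Proof. intros. unfold mmul, idm. apply (msum_delta eqd l i (fun j => A j k)); auto. Qed.
Lemma mmul_idr {I} (l : list I) eqd A i k : NoDup l -> In k l -> mmul l A (idm eqd) i k = A i k.
Proof. intros. unfold mmul, idm. apply (msum_delta' eqd l k (fun j => A i j)); auto. Qed.

Lemma is_inv_unique {I} (l : list I) eqd A B B' : NoDup l -> is_inv l eqd A B -> is_inv l eqd A B' ->
  forall i k, In i l -> In k l -> B i k = B' i k.
Proof.
  intros Hnd H H' i k Hi Hk.
  rewrite <- (mmul_idl l eqd B' i k); auto.
  rewrite <- (mmul_idr l eqd B i k); auto.
  transitivity (mmul l (mmul l B A) B' i k).
  - rewrite mmul_assoc. unfold mmul at 1 3. apply msum_ext; intros j Hj. f_equal. symmetry; apply H'; auto.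
  - unfold mmul at 1 3. apply msum_ext; intros j Hj. f_equal. apply H; auto.
Qed.

Lemma minv_spec {I} (l : list I) eqd A B : is_inv l eqd A B -> is_inv l eqd A (minv l eqd A).
Proof.
  intros H. unfold minv. apply epsilon_spec. exists B; exact H.
Qed.

Lemma minv_eq {I} (l : list I) eqd A B : NoDup l -> is_inv l eqd A B ->
  forall i k, In i l -> In k l -> minv l eqd A i k = B i k.
Proof.
  intros. eapply is_inv_unique; eauto. eapply minv_spec; eauto.
Qed.

Lemma deriv_eq f x l : derivable_pt_lim f x l -> deriv f x = l.
Proof.
  intros H. unfold deriv. apply (uniqueness_limite f x); auto.
  apply epsilon_spec. exists l; exact H.
Qed.

Definition cont (f : R -> R) := forall x, continuous f x.

Lemma Rint_RInt f a b : ex_RInt f a b -> Rint f a b = RInt f a b.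
Proof.
  intros H. pose proof (ex_RInt_Reals_0 _ _ _ H) as pr.
  unfold Rint. assert (E : exists I, exists pr : Riemann_integrable f a b, RiemannInt pr = I)
    by (exists (RiemannInt pr); exists pr; reflexivity).
  destruct (epsilon_spec (inhabits 0) _ E) as [pr' Hpr']. rewrite <- Hpr'.
  symmetry; apply RInt_Reals.
Qed.

Section BC.
Implicit Types (f g w : R -> R) (a b c : R).
Ltac toR := match goal with |- @eq _ ?x ?y => change (@eq R x y) end.

Lemma cont_const c : cont (fun _ => c).
Proof. intros x; apply continuous_const. Qed.
Lemma cont_id : cont (fun x => x).
Proof. intros x; apply continuous_id. Qed.
Lemma cont_plus f g : cont f -> cont g -> cont (fun x => f x + g x).
Proof. intros Hf Hg x. apply (continuous_plus f g x); auto. Qed.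
Lemma cont_mult f g : cont f -> cont g -> cont (fun x => f x * g x).
Proof. intros Hf Hg x. apply (continuous_mult f g x); auto. Qed.
Lemma cont_pow f n : cont f -> cont (fun x => f x ^ n).
Proof. intros Hf. induction n; simpl. apply cont_const. apply cont_mult; auto. Qed.
Lemma cont_msum {I} (l : list I) (f : I -> R -> R) : (forall i, In i l -> cont (f i)) -> cont (fun x => msum l (fun i => f i x)).
Proof. induction l; simpl; intros H. apply cont_const. apply cont_plus; auto. Qed.
Lemma cont_ext f g : (forall x, f x = g x) -> cont f -> cont g.
Proof. intros E H. replace g with f; auto. apply functional_extensionality; auto. Qed.
Lemma cont_deriv f : (forall x, exists l, derivable_pt_lim f x l) -> cont f.
Proof. intros H x. destruct (H x) as [l Hl]. apply (ex_derive_continuous (K:=R_AbsRing) (V:=R_NormedModule)). exists l. apply is_derive_Reals; auto. Qed.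

Lemma cont_ex f a b : cont f -> ex_RInt f a b.
Proof. intros H. apply (@ex_RInt_continuous R_CompleteNormedModule). intros; apply H. Qed.

Lemma Rint_cont f a b : cont f -> Rint f a b = RInt f a b.
Proof. intros; apply Rint_RInt, cont_ex; auto. Qed.

Lemma ex_RInt_msum {I} (l : list I) (f : I -> R -> R) a b : (forall i, In i l -> ex_RInt (f i) a b) ->
  ex_RInt (fun x => msum l (fun i => f i x)) a b.
Proof.
  induction l; simpl; intros H. apply (@ex_RInt_const R_NormedModule).
  apply (ex_RInt_plus (f a0) (fun x => msum l (fun i => f i x))); auto.
Qed.

Lemma RInt_msum {I} (l : list I) (f : I -> R -> R) a b : (forall i, In i l -> ex_RInt (f i) a b) ->
  RInt (fun x => msum l (fun i => f i x)) a b = msum l (fun i => RInt (f i) a b).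
Proof.
  induction l; simpl; intros H.
  - rewrite RInt_const. unfold scal; simpl; unfold mult; simpl. ring.
  - rewrite <- IHl by auto. apply (RInt_plus (f a0) (fun x => msum l (fun i => f i x))); auto.
    apply ex_RInt_msum; auto.
Qed.

Lemma RInt_ext' f g a b : (forall x, Rmin a b < x < Rmax a b -> f x = g x) -> RInt f a b = RInt g a b.
Proof. intros; apply RInt_ext; auto. Qed.
Lemma RInt_scal' f a b c : ex_RInt f a b -> RInt (fun x => c * f x) a b = c * RInt f a b.
Proof. intros H. apply (RInt_scal f a b c H). Qed.
Lemma RInt_scalr f a b c : ex_RInt f a b -> RInt (fun x => f x * c) a b = RInt f a b * c.
Proof. intros H. transitivity (RInt (fun x => c * f x) a b). apply RInt_ext'; intros; ring. rewrite RInt_scal'; auto; toR; ring. Qed.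
Lemma RInt_plus' f g a b : ex_RInt f a b -> ex_RInt g a b -> RInt (fun x => f x + g x) a b = RInt f a b + RInt g a b.
Proof. intros; apply (RInt_plus f g); auto. Qed.

Lemma Rint_ext_on f g a b : a <= b -> (forall x, a <= x <= b -> g x = f x) -> ex_RInt f a b ->
  Rint g a b = RInt f a b.
Proof.
  intros Hab E H.
  assert (Hg : ex_RInt g a b).
  { apply (ex_RInt_ext f). rewrite Rmin_left, Rmax_right by lra. intros; symmetry; apply E; lra. auto. }
  rewrite Rint_RInt by auto. apply RInt_ext'. rewrite Rmin_left, Rmax_right by lra. intros; apply E; lra.
Qed.

Lemma cont_RInt_var w : cont w -> cont (fun r => RInt w 0 (1 - r)).
Proof.
  intros Hw x.
  apply (continuous_comp (fun r => 1 - r) (RInt w 0)).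
  - apply (continuous_minus (fun _ => 1) (fun r => r)); [apply continuous_const|apply continuous_id].
  - apply (continuous_RInt_1 w 0 (1 - x) (RInt w 0)).
    apply filter_forall. intros z. apply (@RInt_correct R_CompleteNormedModule). apply cont_ex; auto.
Qed.

Definition sepf (L : list ((R -> R) * (R -> R))) (r s : R) : R := msum L (fun p => fst p r * snd p s).
Definition sepok (L : list ((R -> R) * (R -> R))) : Prop := forall p, In p L -> cont (fst p) /\ cont (snd p).
Definition sep2 (F : R -> R -> R) : Prop := exists L, sepok L /\ forall r s, F r s = sepf L r s.

Definition sepint (L : list ((R -> R) * (R -> R))) : R :=
  msum L (fun p => RInt (fun r => fst p r * RInt (snd p) 0 (1 - r)) 0 1).

Lemma intT_sepf L : sepok L -> intT (sepf L) = sepint L.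
Proof.
  intros HL. unfold intT, sepf, sepint.
  assert (E : (fun r => Rint (fun s => msum L (fun p => fst p r * snd p s)) 0 (1 - r))
            = (fun r => msum L (fun p => fst p r * RInt (snd p) 0 (1 - r)))).
  { apply functional_extensionality; intros r.
    rewrite Rint_cont. rewrite RInt_msum. apply msum_ext; intros p Hp.
    apply RInt_scal'. apply cont_ex, HL; auto.
    intros p Hp. apply cont_ex. apply cont_mult. apply cont_const. apply HL; auto.
    apply (cont_msum L (fun p s => fst p r * snd p s)). intros p Hp. apply cont_mult. apply cont_const. apply HL; auto. }
  rewrite E. rewrite Rint_cont. apply RInt_msum.
  intros p Hp. apply cont_ex, cont_mult. apply HL; auto. apply cont_RInt_var, HL; auto.
  apply (cont_msum L (fun p r => fst p r * RInt (snd p) 0 (1 - r))). intros p Hp.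
  apply cont_mult. apply HL; auto. apply cont_RInt_var, HL; auto.
Qed.

Lemma intT_ext F G : (forall r s, F r s = G r s) -> intT F = intT G.
Proof. intros E. f_equal. apply functional_extensionality; intros; apply functional_extensionality; intros; auto. Qed.

Lemma intT_sep F L : sepok L -> (forall r s, F r s = sepf L r s) -> intT F = sepint L.
Proof. intros HL E. rewrite (intT_ext F (sepf L)); auto. apply intT_sepf; auto. Qed.

Lemma sepok_app L1 L2 : sepok L1 -> sepok L2 -> sepok (L1 ++ L2).
Proof. intros H1 H2 p Hp. apply in_app_or in Hp; destruct Hp; auto. Qed.
Lemma sepf_app L1 L2 r s : sepf (L1 ++ L2) r s = sepf L1 r s + sepf L2 r s.
Proof. unfold sepf; apply msum_app. Qed.
Lemma sepint_app L1 L2 : sepint (L1 ++ L2) = sepint L1 + sepint L2.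
Proof. unfold sepint; apply msum_app. Qed.

Definition sepscal (c : R) L := map (fun p : (R -> R) * (R -> R) => (fun r => c * fst p r, snd p)) L.
Lemma sepok_scal c L : sepok L -> sepok (sepscal c L).
Proof. intros H p Hp. unfold sepscal in Hp. apply in_map_iff in Hp. destruct Hp as [q [<- Hq]].
  simpl. split. apply cont_mult. apply cont_const. apply H; auto. apply H; auto. Qed.
Lemma sepf_scal c L r s : sepf (sepscal c L) r s = c * sepf L r s.
Proof. unfold sepf, sepscal. rewrite msum_map, <- msum_scal. apply msum_ext; intros; simpl; ring. Qed.
Lemma sepint_scal c L : sepok L -> sepint (sepscal c L) = c * sepint L.
Proof. intros H. unfold sepint, sepscal. rewrite msum_map, <- msum_scal. apply msum_ext; intros p Hp; simpl.
  rewrite <- RInt_scal'. apply RInt_ext'; intros; ring.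
  apply cont_ex, cont_mult. apply H; auto. apply cont_RInt_var, H; auto. Qed.

Definition sepmul L1 L2 := map (fun pq : ((R -> R) * (R -> R)) * ((R -> R) * (R -> R)) =>
   (fun r => fst (fst pq) r * fst (snd pq) r, fun s => snd (fst pq) s * snd (snd pq) s)) (list_prod L1 L2).
Lemma sepok_mul L1 L2 : sepok L1 -> sepok L2 -> sepok (sepmul L1 L2).
Proof. intros H1 H2 p Hp. unfold sepmul in Hp. apply in_map_iff in Hp. destruct Hp as [[q1 q2] [<- Hq]].
  apply in_prod_iff in Hq. destruct Hq as [Ha Hb]. simpl. destruct (H1 _ Ha), (H2 _ Hb). split; apply cont_mult; auto. Qed.
Lemma sepf_mul L1 L2 r s : sepf (sepmul L1 L2) r s = sepf L1 r s * sepf L2 r s.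
Proof. unfold sepf, sepmul. rewrite msum_map, msum_mult. apply msum_ext; intros; simpl; ring. Qed.

Lemma sep2_plus F G : sep2 F -> sep2 G -> sep2 (fun r s => F r s + G r s).
Proof. intros [L1 [H1 E1]] [L2 [H2 E2]]. exists (L1 ++ L2). split. apply sepok_app; auto.
  intros; rewrite sepf_app, E1, E2; auto. Qed.
Lemma sep2_mult F G : sep2 F -> sep2 G -> sep2 (fun r s => F r s * G r s).
Proof. intros [L1 [H1 E1]] [L2 [H2 E2]]. exists (sepmul L1 L2). split. apply sepok_mul; auto.
  intros; rewrite sepf_mul, E1, E2; auto. Qed.
Lemma sep2_scal c F : sep2 F -> sep2 (fun r s => c * F r s).
Proof. intros [L1 [H1 E1]]. exists (sepscal c L1). split. apply sepok_scal; auto.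
  intros; rewrite sepf_scal, E1; auto. Qed.
Lemma sep2_term u w : cont u -> cont w -> sep2 (fun r s => u r * w s).
Proof. intros Hu Hw. exists ((u, w) :: nil). split. intros p [<-|[]]; simpl; auto.
  intros; unfold sepf; simpl; ring. Qed.
Lemma sep2_msum {I} (l : list I) F : (forall i, In i l -> sep2 (F i)) -> sep2 (fun r s => msum l (fun i => F i r s)).
Proof. induction l; simpl; intros H.
  - exists nil. split. intros p []. intros; reflexivity.
  - apply sep2_plus; auto. Qed.
Lemma sep2_ext F G : (forall r s, F r s = G r s) -> sep2 F -> sep2 G.
Proof. intros E [L [H1 E1]]. exists L. split; auto. intros; rewrite <- E; auto. Qed.

Lemma intT_plus F G : sep2 F -> sep2 G -> intT (fun r s => F r s + G r s) = intT F + intT G.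
Proof. intros [L1 [H1 E1]] [L2 [H2 E2]].
  rewrite (intT_sep F L1), (intT_sep G L2), (intT_sep _ (L1 ++ L2)); auto.
  apply sepint_app. apply sepok_app; auto. intros; rewrite sepf_app, E1, E2; auto. Qed.
Lemma intT_scal c F : sep2 F -> intT (fun r s => c * F r s) = c * intT F.
Proof. intros [L1 [H1 E1]].
  rewrite (intT_sep F L1), (intT_sep _ (sepscal c L1)); auto. apply sepint_scal; auto.
  apply sepok_scal; auto. intros; rewrite sepf_scal, E1; auto. Qed.
Lemma intT_msum {I} (l : list I) F : (forall i, In i l -> sep2 (F i)) ->
  intT (fun r s => msum l (fun i => F i r s)) = msum l (fun i => intT (F i)).
Proof. induction l; simpl; intros H.
  - rewrite (intT_sep _ nil). reflexivity. intros p []. intros; reflexivity.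
  - rewrite intT_plus, IHl; auto. apply sep2_msum; auto. Qed.


Lemma cont_pt f x : cont f -> continuity_pt f x.
Proof. intros H. apply continuity_pt_filterlim. apply H. Qed.

Lemma RInt_zero_nonneg f a b : cont f -> a < b -> (forall x, a <= x <= b -> 0 <= f x) ->
  RInt f a b = 0 -> forall x, a <= x <= b -> f x = 0.
Proof.
  intros Hc Hab Hpos HI x0 Hx0.
  destruct (Hpos x0 Hx0) as [Hp|Hp]; [|auto]. exfalso.
  destruct (cont_pt f x0 Hc (f x0 / 2)) as [del [Hdel Hd]]. lra.
  set (c := Rmax a (x0 - del / 2)). set (d := Rmin b (x0 + del / 2)).
  assert (Hcd : c < d). { unfold c, d. unfold Rmax, Rmin. repeat destruct Rle_dec; lra. }
  assert (Hac : a <= c) by (unfold c; apply Rmax_l).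
  assert (Hdb : d <= b) by (unfold d; apply Rmin_l).
  assert (Hin : forall x, c <= x <= d -> a <= x <= b /\ Rabs (x - x0) < del).
  { intros x Hx. unfold c, d, Rmax, Rmin in Hx. repeat destruct Rle_dec in Hx; (split; [lra|apply Rabs_def1; lra]). }
  assert (Hgt : 0 < RInt f c d).
  { apply RInt_gt_0; auto. intros x Hx. destruct (Hin x (conj (Rlt_le _ _ (proj1 Hx)) (Rlt_le _ _ (proj2 Hx)))) as [H1 H2].
    destruct (Req_dec x x0) as [->|Hne]. lra.
    assert (Hdist := Hd x). simpl in Hdist. unfold R_dist in Hdist. 
    assert (Rabs (f x - f x0) < f x0 / 2). { apply Hdist. split. unfold D_x, no_cond. split; auto. auto. }
    apply Rabs_def2 in H. lra. }
  assert (E1 : RInt f a b = RInt f a c + RInt f c d + RInt f d b).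
  { rewrite <- (RInt_Chasles f a c b), <- (RInt_Chasles f c d b); try apply cont_ex; auto.
    unfold plus; simpl. ring. }
  assert (0 <= RInt f a c). { apply RInt_ge_0; auto. apply cont_ex; auto. intros; apply Hpos; lra. }
  assert (0 <= RInt f d b). { apply RInt_ge_0; auto. apply cont_ex; auto. intros; apply Hpos; lra. }
  lra.
Qed.

Lemma cont_limit1 h : cont h -> (forall x, 0 <= x < 1 -> h x = 0) -> h 1 = 0.
Proof.
  intros Hc Hz. destruct (Req_dec (h 1) 0) as [|Hne]; auto. exfalso.
  destruct (cont_pt h 1 Hc (Rabs (h 1))) as [del [Hdel Hd]]. apply Rabs_pos_lt; auto.
  set (x := Rmax 0 (1 - del / 2)).
  assert (Hx : 0 <= x < 1 /\ Rabs (x - 1) < del).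
  { unfold x, Rmax. destruct Rle_dec; split; try lra; apply Rabs_def1; lra. }
  assert (Rabs (h x - h 1) < Rabs (h 1)).
  { apply (Hd x). split. split. exact I. intro E. rewrite E in Hx. lra. apply Hx. }
  rewrite Hz in H by apply Hx. rewrite Rminus_0_l, Rabs_Ropp in H. lra.
Qed.

Lemma sep2_cont_s F : sep2 F -> forall r, cont (F r).
Proof.
  intros [L [HL E]] r. apply (cont_ext (sepf L r)). intros; rewrite E; auto.
  apply (cont_msum L (fun p s => fst p r * snd p s)). intros p Hp. apply cont_mult. apply cont_const. apply HL; auto.
Qed.
Lemma sep2_cont_r F : sep2 F -> forall s, cont (fun r => F r s).
Proof.
  intros [L [HL E]] s. apply (cont_ext (fun r => sepf L r s)). intros; rewrite E; auto.
  apply (cont_msum L (fun p r => fst p r * snd p s)). intros p Hp. apply cont_mult. apply HL; auto. apply cont_const.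
Qed.
Lemma sep2_cont_G F : sep2 F -> cont (fun r => RInt (F r) 0 (1 - r)).
Proof.
  intros [L [HL E]].
  apply (cont_ext (fun r => msum L (fun p => fst p r * RInt (snd p) 0 (1 - r)))).
  - intros r. transitivity (RInt (fun s => sepf L r s) 0 (1 - r)).
    + unfold sepf. rewrite RInt_msum. apply msum_ext; intros p Hp. symmetry; apply RInt_scal'. apply cont_ex, HL; auto.
      intros p Hp. apply cont_ex, cont_mult. apply cont_const. apply HL; auto.
    + apply RInt_ext'. intros; rewrite E; auto.
  - apply (cont_msum L (fun p r => fst p r * RInt (snd p) 0 (1 - r))). intros p Hp.
    apply cont_mult. apply HL; auto. apply cont_RInt_var, HL; auto.
Qed.

Definition inT r s := 0 <= r /\ 0 <= s /\ r + s <= 1.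

Lemma intT_zero_nonneg F : sep2 F -> (forall r s, inT r s -> 0 <= F r s) -> intT F = 0 ->
  forall r s, inT r s -> F r s = 0.
Proof.
  intros HF Hpos HI.
  assert (HG : forall r, 0 <= r <= 1 -> RInt (F r) 0 (1 - r) = 0).
  { apply (RInt_zero_nonneg (fun r => RInt (F r) 0 (1 - r))). apply sep2_cont_G; auto. lra.
    - intros x Hx. apply RInt_ge_0. lra. apply cont_ex, sep2_cont_s; auto. intros s Hs. apply Hpos. unfold inT; lra.
    - unfold intT in HI. erewrite Rint_ext_on in HI. exact HI. lra.
      intros x Hx. apply Rint_cont, sep2_cont_s; auto. apply cont_ex, sep2_cont_G; auto. }
  assert (Hlt : forall r s, 0 <= r < 1 -> 0 <= s <= 1 - r -> F r s = 0).
  { intros r s Hr Hs. apply (RInt_zero_nonneg (F r) 0 (1 - r)). apply sep2_cont_s; auto. lra.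
    intros; apply Hpos; unfold inT; lra. apply HG; lra. lra. }
  intros r s [H1 [H2 H3]]. destruct (Req_dec r 1) as [->|Hne].
  - replace s with 0 by lra. apply (cont_limit1 (fun r => F r 0)). apply sep2_cont_r; auto.
    intros; apply Hlt; lra.
  - apply Hlt; lra.
Qed.

End BC.

Definition injN (N : nat) (tn : nat -> R) := forall a b, (a <= N)%nat -> (b <= N)%nat -> tn a = tn b -> a = b.

Lemma fold_one (F : nat -> R) l : (forall m, In m l -> F m = 1) -> fold_right (fun m acc => F m * acc) 1 l = 1.
Proof. induction l; simpl; intros H; auto. rewrite H, IHl; auto. ring. Qed.
Lemma fold_zero (F : nat -> R) l k : In k l -> F k = 0 -> fold_right (fun m acc => F m * acc) 1 l = 0.
Proof. induction l; simpl; intros Hk H; [contradiction|]. destruct Hk as [<-|Hk]. rewrite H; ring. rewrite IHl; auto; ring. Qed.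

Lemma lag_node N tn j k : (j <= N)%nat -> (k <= N)%nat -> injN N tn ->
  lag1D N tn j (tn k) = if Nat.eq_dec j k then 1 else 0.
Proof.
  intros Hj Hk Hinj. unfold lag1D. destruct (Nat.eq_dec j k) as [<-|ne].
  - apply (fold_one (fun m => if Nat.eq_dec m j then 1 else (tn j - tn m) / (tn j - tn m))).
    intros m Hm. apply in_seq in Hm. destruct (Nat.eq_dec m j); auto.
    field. intro E. apply n. symmetry. apply Hinj; lia || lra.
  - apply (fold_zero (fun m => if Nat.eq_dec m j then 1 else (tn k - tn m) / (tn j - tn m)) _ k).
    apply in_seq; lia. destruct (Nat.eq_dec k j). congruence. unfold Rdiv. ring.
Qed.

Lemma incr_inj N tn : (forall j, (j < N)%nat -> tn j < tn (S j)) -> injN N tn.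
Proof.
  intros H.
  assert (Hlt : forall a b, (a < b)%nat -> (b <= N)%nat -> tn a < tn b).
  { intros a b Hab. induction Hab; intros HN. apply H; lia.
    apply Rlt_trans with (tn m). apply IHHab; lia. apply H; lia. }
  intros a b Ha Hb E. destruct (lt_eq_lt_dec a b) as [[l|e]|l]; auto.
  - specialize (Hlt a b l Hb). lra.
  - specialize (Hlt b a l Ha). lra.
Qed.

Lemma sum_f_ext (f g : nat -> R) n : (forall i, (i <= n)%nat -> f i = g i) -> sum_f_R0 f n = sum_f_R0 g n.
Proof. induction n; simpl; intros H. apply H; lia. rewrite IHn, H; auto. Qed.
Lemma sum_f_zero (f : nat -> R) n : (forall i, (i <= n)%nat -> f i = 0) -> sum_f_R0 f n = 0.
Proof. intros H. rewrite (sum_f_ext f (fun _ => 0)); auto. clear H; induction n; simpl; auto. rewrite IHn; ring. Qed.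
Lemma sum_f_plus (f g : nat -> R) n : sum_f_R0 (fun i => f i + g i) n = sum_f_R0 f n + sum_f_R0 g n.
Proof. induction n; simpl; auto. rewrite IHn; ring. Qed.
Lemma sum_f_scal (f : nat -> R) c n : sum_f_R0 (fun i => c * f i) n = c * sum_f_R0 f n.
Proof. induction n; simpl; auto. rewrite IHn; ring. Qed.
Lemma sum_f_delta (x : R) k n : (k <= n)%nat -> sum_f_R0 (fun i => if Nat.eq_dec i k then x else 0) n = x.
Proof.
  induction n; intros Hk.
  - destruct k; [reflexivity|exfalso; lia].
  - rewrite tech5. destruct (Nat.eq_dec (S n) k) as [e|ne].
    + rewrite sum_f_zero. ring. intros i Hi. destruct (Nat.eq_dec i k); auto; exfalso; lia.
    + rewrite IHn by lia. ring.
Qed.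

Lemma derivable_sum_f (F : nat -> R -> R) (l : nat -> R) x n :
  (forall i, (i <= n)%nat -> derivable_pt_lim (F i) x (l i)) ->
  derivable_pt_lim (fun u => sum_f_R0 (fun i => F i u) n) x (sum_f_R0 l n).
Proof.
  induction n; simpl; intros H. apply H; lia.
  apply (derivable_pt_lim_plus (fun u => sum_f_R0 (fun i => F i u) n) (F (S n))); auto.
Qed.

Lemma derivable_monom c a b s x :
  derivable_pt_lim (fun u => c * u ^ a * s ^ b) x (c * (INR a * x ^ pred a) * s ^ b).
Proof.
  apply is_derive_Reals. auto_derive. auto. ring.
Qed.
Lemma derivable_monom_s c a b r x :
  derivable_pt_lim (fun u => c * r ^ a * u ^ b) x (c * r ^ a * (INR b * x ^ pred b)).
Proof.
  apply is_derive_Reals. auto_derive. auto. ring.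
Qed.

Lemma polyN_zero N : is_polyN N (fun _ _ => 0).
Proof. exists (fun _ _ => 0). intros. symmetry. apply sum_f_zero; intros. apply sum_f_zero; intros. ring. Qed.
Lemma polyN_plus N f g : is_polyN N f -> is_polyN N g -> is_polyN N (fun r s => f r s + g r s).
Proof.
  intros [c1 E1] [c2 E2]. exists (fun a b => c1 a b + c2 a b). intros r s.
  rewrite E1, E2, <- sum_f_plus. apply sum_f_ext; intros. rewrite <- sum_f_plus. apply sum_f_ext; intros. ring.
Qed.
Lemma polyN_scal N k f : is_polyN N f -> is_polyN N (fun r s => k * f r s).
Proof.
  intros [c1 E1]. exists (fun a b => k * c1 a b). intros r s.
  rewrite E1, <- sum_f_scal. apply sum_f_ext; intros. rewrite <- sum_f_scal. apply sum_f_ext; intros. ring.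
Qed.
Lemma polyN_ext N f g : (forall r s, f r s = g r s) -> is_polyN N f -> is_polyN N g.
Proof. intros E [c H]. exists c. intros; rewrite <- E; auto. Qed.
Lemma polyN_sum_f N n (F : nat -> R -> R -> R) : (forall i, (i <= n)%nat -> is_polyN N (F i)) ->
  is_polyN N (fun r s => sum_f_R0 (fun i => F i r s) n).
Proof.
  induction n; simpl; intros H. apply H; lia.
  apply (polyN_plus N (fun r s => sum_f_R0 (fun i => F i r s) n)); auto.
Qed.
Lemma polyN_msum {I} N (l : list I) (F : I -> R -> R -> R) : (forall i, In i l -> is_polyN N (F i)) ->
  is_polyN N (fun r s => msum l (fun i => F i r s)).
Proof.
  induction l; simpl; intros H. apply polyN_zero.
  apply (polyN_plus N (F a)); auto.
Qed.
Lemma polyN_monom N a b : (a + b <= N)%nat -> is_polyN N (fun r s => r ^ a * s ^ b).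
Proof.
  intros Hab. exists (fun a' b' => if Nat.eq_dec a' a then if Nat.eq_dec b' b then 1 else 0 else 0).
  intros r s. symmetry.
  rewrite (sum_f_ext _ (fun a' => if Nat.eq_dec a' a then r ^ a * s ^ b else 0)).
  apply sum_f_delta; lia.
  intros a' Ha'. destruct (Nat.eq_dec a' a).
  - subst. rewrite (sum_f_ext _ (fun b' => if Nat.eq_dec b' b then r ^ a * s ^ b else 0)).
    apply sum_f_delta; lia. intros b' _. destruct Nat.eq_dec; [subst; ring|ring].
  - apply sum_f_zero; intros; ring.
Qed.

Definition polyDr (c : nat -> nat -> R) N (r s : R) :=
  sum_f_R0 (fun a => sum_f_R0 (fun b => c a b * (INR a * r ^ pred a) * s ^ b) (N - a)) N.
Definition polyDs (c : nat -> nat -> R) N (r s : R) :=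
  sum_f_R0 (fun a => sum_f_R0 (fun b => c a b * r ^ a * (INR b * s ^ pred b)) (N - a)) N.

Lemma polyN_dr N f : is_polyN N f -> exists g, is_polyN N g /\
  forall r s, derivable_pt_lim (fun u => f u s) r (g r s).
Proof.
  intros [c E]. exists (polyDr c N). split.
  - unfold polyDr. apply (polyN_sum_f N N (fun a r s => sum_f_R0 (fun b => c a b * (INR a * r ^ pred a) * s ^ b) (N - a))).
    intros a Ha. apply (polyN_sum_f N (N - a) (fun b r s => c a b * (INR a * r ^ pred a) * s ^ b)).
    intros b Hb. destruct a as [|a].
    + apply (polyN_ext N (fun _ _ => 0)). intros; simpl; ring. apply polyN_zero.
    + apply (polyN_ext N (fun r s => (c (S a) b * INR (S a)) * (r ^ a * s ^ b))). intros; simpl; ring.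
      apply polyN_scal, polyN_monom. lia.
  - intros r s. apply (derivable_pt_lim_ext (fun u => sum_f_R0 (fun a => sum_f_R0 (fun b => c a b * u ^ a * s ^ b) (N - a)) N)).
    intros; rewrite E; auto.
    apply (derivable_sum_f (fun a u => sum_f_R0 (fun b => c a b * u ^ a * s ^ b) (N - a))). intros a _.
    apply (derivable_sum_f (fun b u => c a b * u ^ a * s ^ b)). intros b _. apply derivable_monom.
Qed.

Lemma polyN_ds N f : is_polyN N f -> exists g, is_polyN N g /\
  forall r s, derivable_pt_lim (fun u => f r u) s (g r s).
Proof.
  intros [c E]. exists (polyDs c N). split.
  - unfold polyDs. apply (polyN_sum_f N N (fun a r s => sum_f_R0 (fun b => c a b * r ^ a * (INR b * s ^ pred b)) (N - a))).
    intros a Ha. apply (polyN_sum_f N (N - a) (fun b r s => c a b * r ^ a * (INR b * s ^ pred b))).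
    intros b Hb. destruct b as [|b].
    + apply (polyN_ext N (fun _ _ => 0)). intros; simpl; ring. apply polyN_zero.
    + apply (polyN_ext N (fun r s => (c a (S b) * INR (S b)) * (r ^ a * s ^ b))). intros; simpl; ring.
      apply polyN_scal, polyN_monom. lia.
  - intros r s. apply (derivable_pt_lim_ext (fun u => sum_f_R0 (fun a => sum_f_R0 (fun b => c a b * r ^ a * u ^ b) (N - a)) N)).
    intros; rewrite E; auto.
    apply (derivable_sum_f (fun a u => sum_f_R0 (fun b => c a b * r ^ a * u ^ b) (N - a))). intros a _.
    apply (derivable_sum_f (fun b u => c a b * r ^ a * u ^ b)). intros b _. apply derivable_monom_s.
Qed.

Lemma sep2_sum_f n (F : nat -> R -> R -> R) : (forall i, (i <= n)%nat -> sep2 (F i)) ->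
  sep2 (fun r s => sum_f_R0 (fun i => F i r s) n).
Proof.
  induction n; simpl; intros H. apply H; lia.
  apply (sep2_plus (fun r s => sum_f_R0 (fun i => F i r s) n)); auto.
Qed.
Lemma polyN_sep2 N f : is_polyN N f -> sep2 f.
Proof.
  intros [c E]. apply (sep2_ext (fun r s => sum_f_R0 (fun a => sum_f_R0 (fun b => c a b * r ^ a * s ^ b) (N - a)) N)).
  intros; rewrite E; auto.
  apply (sep2_sum_f N (fun a r s => sum_f_R0 (fun b => c a b * r ^ a * s ^ b) (N - a))). intros a _.
  apply (sep2_sum_f (N - a) (fun b r s => c a b * r ^ a * s ^ b)). intros b _.
  apply (sep2_term (fun r => c a b * r ^ a) (fun s => s ^ b)).
  apply cont_mult. apply cont_const. apply cont_pow, cont_id. apply cont_pow, cont_id.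
Qed.

Section Geo.
Variable nu : nat -> nat -> R.
Hypothesis Hvm : vertically_mapped nu.

Definition ga := nu 2%nat 0%nat - nu 1%nat 0%nat.
Definition gb := nu 3%nat 0%nat - nu 1%nat 0%nat.
Definition gc := nu 2%nat 1%nat - nu 1%nat 1%nat.
Definition gd := nu 3%nat 1%nat - nu 1%nat 1%nat.
Definition gD := ga * gd - gb * gc.
Definition ge t := (nu 2%nat 2%nat - nu 1%nat 2%nat) * (1 - t) + (nu 5%nat 2%nat - nu 4%nat 2%nat) * t.
Definition gf t := (nu 3%nat 2%nat - nu 1%nat 2%nat) * (1 - t) + (nu 6%nat 2%nat - nu 4%nat 2%nat) * t.
Definition gg r s := (nu 4%nat 2%nat - nu 1%nat 2%nat) * (1 - r - s) + (nu 5%nat 2%nat - nu 2%nat 2%nat) * r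
   + (nu 6%nat 2%nat - nu 3%nat 2%nat) * s.

Ltac dcomp := apply deriv_eq; apply is_derive_Reals; unfold Phi, vfun; auto_derive; [auto|];
  destruct Hvm as [h1 [h2 [h3 [h4 [h5 h6]]]]]; rewrite <- ?h1, <- ?h2, <- ?h3, <- ?h4, <- ?h5, <- ?h6;
  unfold ga, gb, gc, gd, ge, gf, gg; ring.

Lemma J00 r s t : d_r (Phi nu 0) r s t = ga. Proof. unfold d_r. dcomp. Qed.
Lemma J01 r s t : d_s (Phi nu 0) r s t = gb. Proof. unfold d_s. dcomp. Qed.
Lemma J02 r s t : d_t (Phi nu 0) r s t = 0. Proof. unfold d_t. dcomp. Qed.
Lemma J10 r s t : d_r (Phi nu 1) r s t = gc. Proof. unfold d_r. dcomp. Qed.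
Lemma J11 r s t : d_s (Phi nu 1) r s t = gd. Proof. unfold d_s. dcomp. Qed.
Lemma J12 r s t : d_t (Phi nu 1) r s t = 0. Proof. unfold d_t. dcomp. Qed.
Lemma J20 r s t : d_r (Phi nu 2) r s t = ge t. Proof. unfold d_r. dcomp. Qed.
Lemma J21 r s t : d_s (Phi nu 2) r s t = gf t. Proof. unfold d_s. dcomp. Qed.
Lemma J22 r s t : d_t (Phi nu 2) r s t = gg r s. Proof. unfold d_t. dcomp. Qed.

Lemma Jac_eq r s t : Jac nu r s t = gD * gg r s.
Proof.
  unfold Jac, det3, Jmat. rewrite J00, J01, J02, J10, J11, J12, J20, J21, J22. unfold gD. ring.
Qed.

Definition Binv (r s t : R) (i k : nat) : R :=
  match i, k with
  | O, O => gd / gD | O, S O => - gb / gD | S O, O => - gc / gD | S O, S O => ga / gD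
  | S (S O), O => (- ge t * gd + gf t * gc) / (gD * gg r s)
  | S (S O), S O => (ge t * gb - gf t * ga) / (gD * gg r s)
  | S (S O), S (S O) => / gg r s
  | _, _ => 0
  end.

Lemma Binv_inv r s t : gD <> 0 -> gg r s <> 0 -> is_inv (idx1 3) Nat.eq_dec (Jmat nu r s t) (Binv r s t).
Proof.
  intros HD Hg i k Hi Hk. simpl in Hi, Hk.
  unfold mmul, idm; simpl.
  rewrite ?J00, ?J01, ?J02, ?J10, ?J11, ?J12, ?J20, ?J21, ?J22.
  unfold gD in *.
  destruct Hi as [<-|[<-|[<-|[]]]]; destruct Hk as [<-|[<-|[<-|[]]]]; simpl;
  rewrite ?J00, ?J01, ?J02, ?J10, ?J11, ?J12, ?J20, ?J21, ?J22; unfold gD; split; field; auto.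
Qed.

Lemma gfac_eq r s t i k : gD <> 0 -> gg r s <> 0 -> (i < 3)%nat -> (k < 3)%nat ->
  gfac nu i k r s t = Binv r s t i k.
Proof.
  intros HD Hg Hi Hk. unfold gfac. apply minv_eq. apply seq_NoDup. apply Binv_inv; auto.
  apply in_seq; lia. apply in_seq; lia.
Qed.

Lemma W_nonzero r s t : in_W r s t -> (forall r s t, in_W r s t -> 0 < Jac nu r s t) -> gD <> 0 /\ gg r s <> 0.
Proof.
  intros HW HJ. specialize (HJ r s t HW). rewrite Jac_eq in HJ.
  split; intro E; rewrite E in HJ; lra.
Qed.

End Geo.

Module MCpart.
From mathcomp Require Import all_boot all_order all_algebra.
From mathcomp Require Import Rstruct zify.
Import GRing.Theory.
Local Open Scope ring_scope.

Lemma seq_iota n m : List.seq n m = iota n m.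
Proof. elim: m n => [|m IH] n /=; [done|by rewrite IH]. Qed.

Lemma msum_big (l : list nat) (f : nat -> R) : msum l f = (\sum_(i <- l) f i)%R.
Proof. elim: l => [|a l IH]; first by rewrite big_nil. by rewrite big_cons /= IH. Qed.

Lemma msum_ord n (f : nat -> R) : msum (idx1 n) f = (\sum_(i < n) f i)%R.
Proof. by rewrite /idx1 msum_big seq_iota -(big_mkord xpredT) /index_iota subn0. Qed.

Definition ordfun {n} (F : 'I_n -> R) (m : nat) : R :=
  match @insub _ (fun m => (m < n)%N) _ m with Some o => F o | None => 0%R end.
Lemma ordfunE n F (o : 'I_n) : ordfun F o = F o.
Proof. by rewrite /ordfun valK. Qed.

Lemma inv_of_inj (n : nat) (A : nat -> nat -> R) :
  (forall u : nat -> R, (forall j, (j < n)%nat -> msum (idx1 n) (fun i => Rmult (u i) (A i j)) = 0%R) ->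
      forall i, (i < n)%nat -> u i = 0%R) ->
  exists B, is_inv (idx1 n) Nat.eq_dec A B.
Proof.
  move=> Hinj.
  pose Am : 'M[R]_n := \matrix_(i < n, j < n) A i j.
  have Hfree : row_free Am.
    rewrite -kermx_eq0. apply/eqP/row_matrixP => i. rewrite row0.
    have H0 : row i (kermx Am) *m Am = 0 by rewrite -row_mul mulmx_ker row0.
    apply/rowP => k. rewrite [RHS]mxE.
    pose u := ordfun (fun m => row i (kermx Am) 0 m).
    have Hu : forall (m : 'I_n), u m = row i (kermx Am) 0 m by move=> m; rewrite /u ordfunE.
    rewrite -Hu. apply: Hinj; last by [].
    move=> j Hj. rewrite msum_ord.
    transitivity ((row i (kermx Am) *m Am) 0 (Ordinal Hj)); last by rewrite H0 mxE.
    rewrite mxE. apply: eq_bigr => m _. rewrite Hu /Am !mxE. reflexivity.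
  have Hu : Am \in unitmx by rewrite -row_free_unit.
  pose Bm := invmx Am.
  pose B := fun (i j : nat) => ordfun (fun o => ordfun (fun o' => Bm o o') j) i.
  have HB : forall (i j : 'I_n), B i j = Bm i j by move=> i j; rewrite /B !ordfunE.
  exists B => i k Hi Hk.
  have lt_of_In : forall m, In m (idx1 n) -> (m < n)%N.
    move=> m /in_seq [_ H]. by apply/ltP.
  pose io := Ordinal (lt_of_In _ Hi). pose ko := Ordinal (lt_of_In _ Hk).
  have Eid : idm Nat.eq_dec i k = (1%:M : 'M[R]_n) io ko.
    rewrite /idm mxE. case: Nat.eq_dec => [E|ne].
      have -> : io = ko by apply: val_inj; exact E.
      by rewrite eqxx.
    case: eqP => // E. exfalso. apply: ne. by move: E => /(congr1 val).
  split.
  - rewrite Eid -(mulmxV Hu) mxE /mmul msum_ord. apply: eq_bigr => j _.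
    change (A (nat_of_ord io) j * B j (nat_of_ord ko) = Am io j * Bm j ko)%R.
    by rewrite HB /Am mxE.
  - rewrite Eid -(mulVmx Hu) mxE /mmul msum_ord. apply: eq_bigr => j _.
    change (B (nat_of_ord io) j * A j (nat_of_ord ko) = Bm io j * Am j ko)%R.
    by rewrite HB /Am mxE.
Qed.

Lemma horner_derivable (p : {poly R}) t : derivable_pt_lim (fun x => p.[x]) t (p^`()).[t].
Proof.
  elim/poly_ind: p => [|p c IH].
  - rewrite deriv0 hornerC. apply: (derivable_pt_lim_ext (fun _ => 0%R)).
    by move=> x; rewrite hornerC. apply: derivable_pt_lim_const.
  - rewrite derivMXaddC hornerD hornerMX.
    apply: (derivable_pt_lim_ext (fun x => Rplus (Rmult p.[x] x) c)).
      by move=> x; rewrite hornerMXaddC.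
    have -> : (p.[t] + p^`().[t] * t)%R = Rplus (Rplus (Rmult (p^`()).[t] t) (Rmult p.[t] 1)) 0%R.
      rewrite /GRing.add /GRing.mul /=. by rewrite Rplus_0_r Rmult_1_r Rplus_comm.
    apply: derivable_pt_lim_plus; last by apply: derivable_pt_lim_const.
    apply: (derivable_pt_lim_mult (fun x => p.[x]) (fun x => x)) => //.
    apply: derivable_pt_lim_id.
Qed.

Definition lagfac (tn : nat -> R) (j m : nat) : {poly R} :=
  if m == j then 1 else ('X - (tn m)%:P) * (Rinv (Rminus (tn j) (tn m)))%:P.

Definition lagprod tn j (l : seq nat) : {poly R} := (\prod_(m <- l) lagfac tn j m)%R.
Definition lagpoly N tn j : {poly R} := lagprod tn j (iota 0 N.+1).

Lemma lag_horner N tn j t : lag1D N tn j t = (lagpoly N tn j).[t].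
Proof.
  rewrite /lag1D /lagpoly /lagprod seq_iota. elim: (iota 0 N.+1) => [|a l IH] /=.
  - by rewrite big_nil hornerC.
  - rewrite big_cons hornerM IH /lagfac. case: Nat.eq_dec => [->|ne].
    + by rewrite eqxx hornerC.
    + case: eqP => // _. by rewrite hornerM hornerXsubC hornerC.
Qed.

Lemma lag_size N tn j : (j <= N)%N -> (size (lagpoly N tn j) <= N.+1)%N.
Proof.
  move=> Hj.
  have gen : forall l, (size (lagprod tn j l) <= 1 + count (fun m : nat => m != j) l)%N.
    elim=> [|a l IH]; first by rewrite /lagprod big_nil size_poly1.
    rewrite /lagprod big_cons /=. rewrite -/(lagprod tn j l).
    apply: leq_trans (size_mul_leq _ _) _.
    rewrite /lagfac. case: eqP => [_|_] /=.
    + rewrite size_poly1 /=. move: IH. set y := size (lagprod tn j l). lia.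
    + have H2 : (size ((('X - (tn a)%:P) * (Rinv (Rminus (tn j) (tn a)))%:P)%R) <= 2)%N.
        apply: leq_trans (size_mul_leq _ _) _. rewrite size_XsubC.
        have := size_polyC_leq1 (Rinv (Rminus (tn j) (tn a))). set z := size (_%:P). lia.
      move: IH H2. set y := size (lagprod tn j l). set z := size ((('X - (tn a)%:P) * (Rinv (Rminus (tn j) (tn a)))%:P)%R). lia.
  apply: leq_trans (gen _) _.
  have Hc := count_predC (pred1 j) (iota 0 N.+1).
  have Hm : count (pred1 j) (iota 0 N.+1) = 1%N.
    rewrite (count_uniq_mem _ (iota_uniq 0 N.+1)) mem_iota. by rewrite add0n ltnS Hj.
  rewrite size_iota in Hc.
  have -> : count (fun m : nat => m != j) (iota 0 N.+1) = count (predC (pred1 j)) (iota 0 N.+1) by [].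
  lia.
Qed.

Lemma deriv_eqC f x l : derivable_pt_lim f x l -> Defs.deriv f x = l.
Proof. move=> H. by apply: deriv_eq. Qed.

Lemma lag_derivable N tn j t : derivable_pt_lim (lag1D N tn j) t ((lagpoly N tn j)^`()).[t].
Proof.
  apply: (derivable_pt_lim_ext (fun x => (lagpoly N tn j).[x])).
    by move=> x; rewrite lag_horner.
  exact: horner_derivable.
Qed.

Lemma lag_deriv N tn j t : Defs.deriv (lag1D N tn j) t = ((lagpoly N tn j)^`()).[t].
Proof. apply: deriv_eqC. exact: lag_derivable. Qed.

Lemma lag_derivable2 N tn j t : exists l, derivable_pt_lim (fun x => Defs.deriv (lag1D N tn j) x) t l.
Proof.
  exists ((lagpoly N tn j)^`()^`()).[t].
  apply: (derivable_pt_lim_ext (fun x => ((lagpoly N tn j)^`()).[x])).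
    by move=> x; rewrite lag_deriv.
  exact: horner_derivable.
Qed.

Lemma lag_derivable1 N tn j t : exists l, derivable_pt_lim (lag1D N tn j) t l.
Proof. eexists; exact: lag_derivable. Qed.

Lemma poly_zero_nodes N tn (p : {poly R}) : injN N tn -> (size p <= N.+1)%N ->
  (forall k, (k <= N)%N -> p.[tn k] = 0) -> p = 0.
Proof.
  move=> Hinj Hs Hz. apply/eqP; apply/negPn/negP => Hp.
  have := max_poly_roots Hp (rs := map tn (iota 0 N.+1)).
  rewrite size_map size_iota.
  have -> : all (root p) (map tn (iota 0 N.+1)).
    apply/allP => x /mapP [k Hk ->]. apply/rootP. apply: Hz. by move: Hk; rewrite mem_iota.
  have -> : uniq (map tn (iota 0 N.+1)).
    rewrite map_inj_in_uniq ?iota_uniq // => a b Ha Hb E.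
    move: Ha Hb; rewrite !mem_iota !add0n !ltnS => Ha Hb.
    apply: Hinj => //; by apply/leP.
  move=> /(_ isT isT). move: Hs. set z := size p. lia.
Qed.

Lemma size_sum_leq n m (F : 'I_n -> {poly R}) : (forall i, size (F i) <= m)%N -> (size ((\sum_i F i)%R) <= m)%N.
Proof.
  move=> H. apply: (big_ind (fun p : {poly R} => size p <= m)%N).
  - by rewrite size_poly0.
  - move=> x y Hx Hy. apply: leq_trans (size_add _ _) _. by rewrite geq_max Hx Hy.
  - move=> i _; exact: H.
Qed.

Lemma poly_interp N tn (q : {poly R}) : injN N tn -> (size q <= N.+1)%N ->
  forall t, q.[t] = msum (idx1 N.+1) (fun k => Rmult q.[tn k] (lag1D N tn k t)).
Proof.
  move=> Hinj Hs.
  pose P := (q - \sum_(k < N.+1) q.[tn k] *: lagpoly N tn k).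
  have HP : P = 0.
    apply: (@poly_zero_nodes N tn P Hinj).
    - rewrite /P. apply: leq_trans (size_add _ _) _. rewrite geq_max Hs /= size_opp.
      apply: size_sum_leq => i. apply: leq_trans (size_scale_leq _ _) _. apply: lag_size.
      by rewrite -ltnS.
    - move=> k Hk. rewrite /P hornerD hornerN horner_sum.
      have -> : (\sum_(i < N.+1) (q.[tn i] *: lagpoly N tn i).[tn k]) = q.[tn k].
        rewrite -(msum_ord N.+1 (fun i => (q.[tn i] *: lagpoly N tn i).[tn k])).
        rewrite -(msum_delta' Nat.eq_dec (idx1 N.+1) k (fun i => q.[tn i])); first last.
        - apply/in_seq. split; first by apply/leP. apply/leP. by rewrite ltnS.
        - exact: seq_NoDup.
        apply: msum_ext => i Hi. rewrite hornerZ -lag_horner lag_node //.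
        + move: Hi => /in_seq. lia.
        + move: Hk. lia.
      by rewrite subrr.
  move=> t. have : P.[t] = 0 by rewrite HP hornerC.
  rewrite /P hornerD hornerN horner_sum => /eqP. rewrite subr_eq0 => /eqP ->.
  rewrite msum_ord. apply: eq_bigr => i _. by rewrite hornerZ -lag_horner.
Qed.

Lemma interp_hderiv N tn (al be : R) j : injN N tn -> (j <= N)%N -> forall t,
  Rmult (Rplus al (Rmult be t)) (Defs.deriv (lag1D N tn j) t) =
  msum (idx1 N.+1) (fun k => Rmult (Rmult (Rplus al (Rmult be (tn k))) (Defs.deriv (lag1D N tn j) (tn k))) (lag1D N tn k t)).
Proof.
  move=> Hinj Hj t.
  pose q := ((al%:P + be *: 'X) * (lagpoly N tn j)^`()).
  have Hq : forall x, q.[x] = Rmult (Rplus al (Rmult be x)) (Defs.deriv (lag1D N tn j) x).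
    move=> x. by rewrite /q hornerM hornerD hornerC hornerZ hornerX lag_deriv.
  rewrite -Hq (@poly_interp N tn q Hinj). apply: msum_ext => k _. by rewrite Hq.
  rewrite /q. apply: leq_trans (size_mul_leq _ _) _.
  have H1 : (size ((al%:P + be *: 'X)%R : {poly R}) <= 2)%N.
    apply: leq_trans (size_add _ _) _. rewrite geq_max. apply/andP; split.
    apply: leq_trans (size_polyC_leq1 _) _ => //.
    apply: leq_trans (size_scale_leq _ _) _. by rewrite size_polyX.
  have H2 : (size (((lagpoly N tn j)^`())%R) <= N)%N.
    have := @lag_size N tn j Hj. case: (eqVneq (lagpoly N tn j) 0) => [->|Hnz].
      by rewrite deriv0 size_poly0.
    have := lt_size_deriv Hnz. set a := size _. set b := size _. lia.
  move: H1 H2. set a := size _. set b := size _. lia.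
Qed.

Lemma inv_of_inj_std (n : nat) (A : nat -> nat -> R) :
  (forall u : nat -> R, (forall j, (j < n)%coq_nat -> msum (idx1 n) (fun i => Rmult (u i) (A i j)) = R0) ->
      forall i, (i < n)%coq_nat -> u i = R0) ->
  exists B, is_inv (idx1 n) Nat.eq_dec A B.
Proof.
  move=> H. apply: inv_of_inj => u Hu i /ltP Hi. apply: H => // j Hj. apply: Hu. by apply/ltP.
Qed.

Lemma interp_hderiv_std N tn (al be : R) j : injN N tn -> (j <= N)%coq_nat -> forall t,
  Rmult (Rplus al (Rmult be t)) (Defs.deriv (lag1D N tn j) t) =
  msum (idx1 N.+1) (fun k => Rmult (Rmult (Rplus al (Rmult be (tn k))) (Defs.deriv (lag1D N tn j) (tn k))) (lag1D N tn k t)).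
Proof. move=> H /leP Hj. exact: interp_hderiv. Qed.

End MCpart.
Import MCpart.

Lemma inv_of_inj' (n : nat) (A : nat -> nat -> R) :
  (forall u : nat -> R, (forall j, (j < n)%nat -> msum (idx1 n) (fun i => u i * A i j) = 0) ->
      forall i, (i < n)%nat -> u i = 0) ->
  exists B, is_inv (idx1 n) Nat.eq_dec A B.
Proof. intros H. apply inv_of_inj_std. exact H. Qed.

Lemma quad_form {I} (l : list I) (u : I -> R) (A : I -> I -> R) :
  msum l (fun j => u j * msum l (fun i => u i * A i j)) = msum l (fun j => msum l (fun i => u i * u j * A i j)).
Proof. apply msum_ext; intros. rewrite <- msum_scal. apply msum_ext; intros; ring. Qed.

Lemma In_idx1 n i : In i (idx1 n) <-> (i < n)%nat.
Proof. unfold idx1. rewrite in_seq. lia. Qed.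

Lemma gram2 (n : nat) (phi : nat -> R -> R -> R) (w : R -> R -> R) (pr ps : nat -> R) :
  (forall i, (i < n)%nat -> sep2 (phi i)) -> sep2 w -> (forall r s, inT r s -> 0 < w r s) ->
  (forall k, (k < n)%nat -> inT (pr k) (ps k)) ->
  (forall i k, (i < n)%nat -> (k < n)%nat -> phi i (pr k) (ps k) = if Nat.eq_dec i k then 1 else 0) ->
  exists B, is_inv (idx1 n) Nat.eq_dec (fun i j => intT (fun r s => phi i r s * phi j r s * w r s)) B.
Proof.
  intros Hphi Hw Hwpos Hnodes Hdelta. apply inv_of_inj'. intros u Hu.
  set (p := fun r s => msum (idx1 n) (fun i => u i * phi i r s)).
  assert (Hsp : sep2 p). { apply sep2_msum. intros. apply sep2_scal; auto. apply Hphi, In_idx1; auto. }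
  assert (HF : sep2 (fun r s => p r s * p r s * w r s)). { apply sep2_mult; auto. apply sep2_mult; auto. }
  assert (Hphi' : forall i, In i (idx1 n) -> sep2 (phi i)). { intros; apply Hphi, In_idx1; auto. }
  assert (HI : intT (fun r s => p r s * p r s * w r s) = 0).
  { transitivity (msum (idx1 n) (fun j => u j * msum (idx1 n) (fun i => u i * intT (fun r s => phi i r s * phi j r s * w r s)))).
    - rewrite quad_form.
      rewrite (intT_ext _ (fun r s => msum (idx1 n) (fun j => msum (idx1 n) (fun i => u i * u j * (phi i r s * phi j r s * w r s))))).
      + rewrite intT_msum. apply msum_ext; intros j Hj. rewrite intT_msum. apply msum_ext; intros i Hi.
        apply intT_scal. apply sep2_mult; auto. apply sep2_mult; auto.
        intros; apply sep2_scal. apply sep2_mult; auto. apply sep2_mult; auto.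
        intros; apply sep2_msum; intros; apply sep2_scal. apply sep2_mult; auto. apply sep2_mult; auto.
      + intros r s. unfold p.
        transitivity (msum (idx1 n) (fun j => (msum (idx1 n) (fun i => u i * phi i r s)) * (u j * phi j r s * w r s))).
        * rewrite msum_scal, msum_scalr. ring.
        * apply msum_ext; intros j _. rewrite <- msum_scalr. apply msum_ext; intros; ring.
    - apply msum_zero. intros j Hj. rewrite (Hu j). ring. apply In_idx1; auto. }
  intros k Hk.
  assert (Hz := intT_zero_nonneg _ HF). 
  assert (E : p (pr k) (ps k) * p (pr k) (ps k) * w (pr k) (ps k) = 0).
  { apply Hz. intros r s Hrs. assert (0 < w r s) by auto. cbv beta. apply Rmult_le_pos; [|lra]. apply Rle_0_sqr. exact HI. auto. }
  assert (Hpk : p (pr k) (ps k) = u k).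
  { unfold p. rewrite <- (msum_delta' Nat.eq_dec (idx1 n) k u). apply msum_ext; intros i Hi.
    rewrite Hdelta; auto. apply In_idx1; auto. apply seq_NoDup. apply In_idx1; auto. }
  assert (0 < w (pr k) (ps k)) by auto.
  rewrite Hpk in E. apply Rmult_integral in E. destruct E as [E|E]; [|lra].
  apply Rmult_integral in E. tauto.
Qed.

Lemma gram1 (n : nat) (phi : nat -> R -> R) (tn : nat -> R) :
  (forall i, cont (phi i)) ->
  (forall k, (k < n)%nat -> 0 <= tn k <= 1) ->
  (forall i k, (i < n)%nat -> (k < n)%nat -> phi i (tn k) = if Nat.eq_dec i k then 1 else 0) ->
  exists B, is_inv (idx1 n) Nat.eq_dec (fun i j => RInt (fun t => phi i t * phi j t) 0 1) B.
Proof.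
  intros Hphi Hnodes Hdelta. apply inv_of_inj'. intros u Hu.
  set (p := fun t => msum (idx1 n) (fun i => u i * phi i t)).
  assert (Hsp : cont p). { apply (cont_msum _ (fun i t => u i * phi i t)). intros. apply cont_mult; auto. apply cont_const. }
  assert (HF : cont (fun t => p t * p t)). { apply cont_mult; auto. }
  assert (HI : RInt (fun t => p t * p t) 0 1 = 0).
  { transitivity (msum (idx1 n) (fun j => u j * msum (idx1 n) (fun i => u i * RInt (fun t => phi i t * phi j t) 0 1))).
    - rewrite quad_form.
      rewrite (RInt_ext' _ (fun t => msum (idx1 n) (fun j => msum (idx1 n) (fun i => u i * u j * (phi i t * phi j t))))).
      + rewrite RInt_msum. apply msum_ext; intros j _. rewrite RInt_msum. apply msum_ext; intros i _.
        apply RInt_scal'. apply cont_ex, cont_mult; auto.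
        intros; apply cont_ex, cont_mult. apply cont_const. apply cont_mult; auto.
        intros j0 _; apply cont_ex. apply (cont_msum _ (fun i t => u i * u j0 * (phi i t * phi j0 t))).
        intros. apply cont_mult. apply cont_const. apply cont_mult; auto.
      + intros t _. unfold p.
        transitivity (msum (idx1 n) (fun j => (msum (idx1 n) (fun i => u i * phi i t)) * (u j * phi j t))).
        * rewrite msum_scal. ring.
        * apply msum_ext; intros j _. rewrite <- msum_scalr. apply msum_ext; intros; ring.
    - apply msum_zero. intros j Hj. rewrite (Hu j). ring. apply In_idx1; auto. }
  intros k Hk.
  assert (E : p (tn k) * p (tn k) = 0).
  { apply (RInt_zero_nonneg (fun t => p t * p t) 0 1); auto. lra. intros; nra. }
  assert (Hpk : p (tn k) = u k).
  { unfold p. rewrite <- (msum_delta' Nat.eq_dec (idx1 n) k u). apply msum_ext; intros i Hi.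
    rewrite Hdelta; auto. apply In_idx1; auto. apply seq_NoDup. apply In_idx1; auto. }
  rewrite Hpk in E. nra.
Qed.

Lemma dl_cmul f x l c : derivable_pt_lim f x l -> derivable_pt_lim (fun u => c * f u) x (c * l).
Proof. intros H. exact (derivable_pt_lim_scal f c x l H). Qed.
Lemma dl_mulc f x l c : derivable_pt_lim f x l -> derivable_pt_lim (fun u => f u * c) x (l * c).
Proof. intros H. apply (derivable_pt_lim_ext (fun u => c * f u)). intros; ring.
  replace (l * c) with (c * l) by ring. apply dl_cmul; auto. Qed.

Lemma intT_ext_T F G : (forall r s, inT r s -> F r s = G r s) -> sep2 G -> intT F = intT G.
Proof.
  intros E HG. unfold intT.
  rewrite (Rint_ext_on (fun r => RInt (G r) 0 (1 - r)) (fun r => Rint (fun s => F r s) 0 (1 - r))).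
  rewrite (Rint_ext_on (fun r => RInt (G r) 0 (1 - r)) (fun r => Rint (fun s => G r s) 0 (1 - r))). reflexivity.
  lra. intros x Hx. apply Rint_cont. apply sep2_cont_s; auto. apply cont_ex, sep2_cont_G; auto.
  lra. intros x Hx. rewrite (Rint_ext_on (G x)). reflexivity. lra. intros s Hs. apply E. unfold inT; lra.
  apply cont_ex, sep2_cont_s; auto. apply cont_ex, sep2_cont_G; auto.
Qed.

Lemma tn_mono N tn : (forall j, (j < N)%nat -> tn j < tn (S j)) -> forall a b, (a <= b)%nat -> (b <= N)%nat -> tn a <= tn b.
Proof.
  intros H a b Hab. induction Hab; intros HbN. lra. apply Rle_trans with (tn m). apply IHHab; lia.
  left; apply H; lia.
Qed.

Section Main.
Variable N : nat.
Hypothesis HN : (1 <= N)%nat.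
Variable nu : nat -> nat -> R.
Hypothesis Hvm : vertically_mapped nu.
Hypothesis HJ : forall r s t, in_W r s t -> 0 < Jac nu r s t.
Variables (pr ps : nat -> R) (ltri : nat -> R -> R -> R) (tn : nat -> R).
Hypothesis Hpts : forall i, (i < Ntri N)%nat -> 0 <= pr i /\ 0 <= ps i /\ pr i + ps i <= 1.
Hypothesis Huni : forall f, is_polyN N f ->
            (forall i, (i < Ntri N)%nat -> f (pr i) (ps i) = 0) -> forall r s, f r s = 0.
Hypothesis Hlag : forall i, (i < Ntri N)%nat ->
            is_polyN N (ltri i) /\
            forall k, (k < Ntri N)%nat -> ltri i (pr k) (ps k) = if Nat.eq_dec i k then 1 else 0.
Hypothesis HGLL : is_GLL N tn.

Definition l1 := lag1D N tn.
Definition dl1 j t := deriv (lag1D N tn j) t.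
Definition Jf r s := gD nu * gg nu r s.
Definition dR i r s := deriv (fun u => ltri i u s) r.
Definition dS i r s := deriv (fun u => ltri i r u) s.

Lemma L_inj : injN N tn.
Proof. destruct HGLL as [_ [_ [H _]]]. apply incr_inj; auto. Qed.

Lemma L_tn01 j : (j <= N)%nat -> 0 <= tn j <= 1.
Proof.
  intros Hj. destruct HGLL as [H0 [H1 [H _]]]. split.
  rewrite <- H0. apply (tn_mono N); auto; lia. rewrite <- H1. apply (tn_mono N); auto; lia.
Qed.

Lemma L_gD : gD nu <> 0.
Proof. apply (W_nonzero nu Hvm 0 0 0); auto. unfold in_W; lra. Qed.
Lemma L_gg r s : inT r s -> gg nu r s <> 0.
Proof. intros [H1 [H2 H3]]. apply (W_nonzero nu Hvm r s 0); auto. unfold in_W; lra. Qed.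
Lemma L_Jac r s t : Jac nu r s t = Jf r s.
Proof. apply Jac_eq; auto. Qed.
Lemma L_Jpos r s : inT r s -> 0 < Jf r s.
Proof. intros [H1 [H2 H3]]. rewrite <- (L_Jac r s 0). apply HJ. unfold in_W; lra. Qed.

Lemma L_Jpoly : is_polyN N Jf.
Proof.
  apply (polyN_ext N (fun r s => (gD nu * (nu 4%nat 2%nat - nu 1%nat 2%nat)) * (r ^ 0 * s ^ 0)
     + ((gD nu * ((nu 5%nat 2%nat - nu 2%nat 2%nat) - (nu 4%nat 2%nat - nu 1%nat 2%nat))) * (r ^ 1 * s ^ 0)
     + (gD nu * ((nu 6%nat 2%nat - nu 3%nat 2%nat) - (nu 4%nat 2%nat - nu 1%nat 2%nat))) * (r ^ 0 * s ^ 1)))).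
  intros; unfold Jf, gg; simpl; ring.
  apply polyN_plus. apply polyN_scal, polyN_monom; lia.
  apply polyN_plus; apply polyN_scal, polyN_monom; lia.
Qed.
Lemma L_Jsep : sep2 Jf.
Proof. apply (polyN_sep2 N), L_Jpoly. Qed.

Lemma L_lpoly i : (i < Ntri N)%nat -> is_polyN N (ltri i).
Proof. intros; apply Hlag; auto. Qed.
Lemma L_lsep i : (i < Ntri N)%nat -> sep2 (ltri i).
Proof. intros; apply (polyN_sep2 N), L_lpoly; auto. Qed.

Lemma L_dR i : (i < Ntri N)%nat -> is_polyN N (dR i) /\ forall r s, derivable_pt_lim (fun u => ltri i u s) r (dR i r s).
Proof.
  intros Hi. destruct (polyN_dr N (ltri i) (L_lpoly i Hi)) as [g [Hg Hd]].
  assert (E : forall r s, dR i r s = g r s). { intros; unfold dR; apply deriv_eq; auto. }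
  split. apply (polyN_ext N g). intros; symmetry; apply E. exact Hg.
  intros; rewrite E; apply Hd.
Qed.
Lemma L_dS i : (i < Ntri N)%nat -> is_polyN N (dS i) /\ forall r s, derivable_pt_lim (fun u => ltri i r u) s (dS i r s).
Proof.
  intros Hi. destruct (polyN_ds N (ltri i) (L_lpoly i Hi)) as [g [Hg Hd]].
  assert (E : forall r s, dS i r s = g r s). { intros; unfold dS; apply deriv_eq; auto. }
  split. apply (polyN_ext N g). intros; symmetry; apply E. exact Hg.
  intros; rewrite E; apply Hd.
Qed.

Lemma In_IT k : In k (idx1 (Ntri N)) <-> (k < Ntri N)%nat.
Proof. apply In_idx1. Qed.

Lemma L_interp2 f : is_polyN N f -> forall r s, f r s = msum (idx1 (Ntri N)) (fun k => f (pr k) (ps k) * ltri k r s).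
Proof.
  intros Hf r s.
  set (h := fun r s => f r s + (-1) * msum (idx1 (Ntri N)) (fun k => f (pr k) (ps k) * ltri k r s)).
  assert (Hh : is_polyN N h).
  { apply polyN_plus; auto. apply polyN_scal. apply (polyN_msum N _ (fun k r s => f (pr k) (ps k) * ltri k r s)).
    intros k Hk. apply polyN_scal, L_lpoly, In_IT; auto. }
  assert (Hz : forall m, (m < Ntri N)%nat -> h (pr m) (ps m) = 0).
  { intros m Hm. unfold h.
    rewrite (msum_ext _ _ (fun k => f (pr k) (ps k) * (if Nat.eq_dec k m then 1 else 0))).
    rewrite msum_delta'. ring. apply seq_NoDup. apply In_IT; auto.
    intros k Hk. f_equal. apply Hlag; auto. apply In_IT; auto. }
  pose proof (Huni h Hh Hz r s) as E. unfold h in E. lra.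
Qed.

Lemma L_lcont j : cont (l1 j).
Proof. unfold l1. apply (cont_deriv (lag1D N tn j)). intros; apply lag_derivable1. Qed.
Lemma L_dlcont j : cont (dl1 j).
Proof. unfold dl1. apply (cont_deriv (fun t => deriv (lag1D N tn j) t)). intros; apply lag_derivable2. Qed.


Definition M1 a b := RInt (fun t => l1 a t * l1 b t) 0 1.
Definition Mtri' i k := intT (fun r s => ltri i r s * ltri k r s * Jf r s).
Definition ell (p : nat * nat) (r s t : R) := ltri (fst p) r s * l1 (snd p) t.

Lemma L_M1sym a b : M1 a b = M1 b a.
Proof. unfold M1. apply RInt_ext'. intros; ring. Qed.

Lemma L_mass p q : (fst p < Ntri N)%nat -> (fst q < Ntri N)%nat ->
  intW (fun r s t => ell p r s t * ell q r s t * Jac nu r s t) = Mtri' (fst p) (fst q) * M1 (snd p) (snd q).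
Proof.
  intros Hp Hq.
  change (intT (fun r s => Rint (fun t => ell p r s t * ell q r s t * Jac nu r s t) 0 1) = Mtri' (fst p) (fst q) * M1 (snd p) (snd q)).
  rewrite (intT_ext _ (fun r s => M1 (snd p) (snd q) * (ltri (fst p) r s * ltri (fst q) r s * Jf r s))).
  - unfold Mtri'. rewrite intT_scal. ring.
    apply sep2_mult. apply sep2_mult; apply L_lsep; auto. apply L_Jsep.
  - intros r s. rewrite Rint_cont. unfold M1.
    transitivity (RInt (fun t => (l1 (snd p) t * l1 (snd q) t) * (ltri (fst p) r s * ltri (fst q) r s * Jf r s)) 0 1).
    apply RInt_ext'. intros t _. unfold ell. rewrite L_Jac. ring.
    rewrite RInt_scalr. ring.
    apply cont_ex, cont_mult; apply L_lcont.
    unfold ell. apply cont_mult. apply cont_mult; apply cont_mult; try apply cont_const; apply L_lcont.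
    apply (cont_ext (fun _ => Jf r s)). intros; symmetry; apply L_Jac. apply cont_const.
Qed.

Lemma L_BT : exists BT, is_inv (idx1 (Ntri N)) Nat.eq_dec Mtri' BT.
Proof.
  apply (gram2 (Ntri N) ltri Jf pr ps). intros; apply L_lsep; auto. apply L_Jsep. apply L_Jpos.
  intros k Hk. destruct (Hpts k Hk) as [H1 [H2 H3]]. unfold inT; auto.
  intros i k Hi Hk. apply Hlag; auto.
Qed.

Lemma L_B1 : exists B1, is_inv (idx1 (S N)) Nat.eq_dec M1 B1.
Proof.
  apply (gram1 (S N) l1 tn). intros; apply L_lcont. intros; apply L_tn01; lia.
  intros i k Hi Hk. unfold l1. apply lag_node; try lia. apply L_inj.
Qed.

Definition rc c := Binv nu 0 0 0 0 c.
Definition sc c := Binv nu 0 0 0 1 c.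
Definition hlin (c : nat) (t : R) : R :=
  match c with
  | O => - ge nu t * gd nu + gf nu t * gc nu
  | _ => ge nu t * gb nu - gf nu t * ga nu
  end.

Lemma L_gfac0 c r s t : (c < 2)%nat -> in_W r s t -> gfac nu 0 c r s t = rc c.
Proof.
  intros Hc HW. destruct (W_nonzero nu Hvm r s t HW HJ). rewrite gfac_eq; auto; try lia.
  all: try (destruct c as [|[|c]]; try reflexivity; lia).
Qed.
Lemma L_gfac1 c r s t : (c < 2)%nat -> in_W r s t -> gfac nu 1 c r s t = sc c.
Proof.
  intros Hc HW. destruct (W_nonzero nu Hvm r s t HW HJ). rewrite gfac_eq; auto; try lia.
  all: try (destruct c as [|[|c]]; try reflexivity; lia).
Qed.
Lemma L_gfac2 c r s t : (c < 2)%nat -> in_W r s t -> gfac nu 2 c r s t * Jf r s = hlin c t.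
Proof.
  intros Hc HW. destruct (W_nonzero nu Hvm r s t HW HJ). rewrite gfac_eq; auto; try lia.
  all: try (unfold Jf; destruct c as [|[|c]]; simpl; try lia; field; auto).
Qed.
Lemma L_hlin_lin c t : hlin c t = hlin c 0 + (hlin c 1 - hlin c 0) * t.
Proof. unfold hlin, ge, gf. destruct c; ring. Qed.
Lemma L_hcont c : cont (hlin c).
Proof.
  apply (cont_ext (fun t => hlin c 0 + (hlin c 1 - hlin c 0) * t)). intros; symmetry; apply L_hlin_lin.
  apply cont_plus. apply cont_const. apply cont_mult. apply cont_const. apply cont_id.
Qed.

Ltac conttac := repeat match goal with
  | |- cont (fun _ => ?c) => apply cont_const
  | |- cont (l1 _) => apply L_lcont
  | |- cont (dl1 _) => apply L_dlcont
  | |- cont (hlin _) => apply L_hcont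
  | |- cont (fun x => l1 ?j x) => apply L_lcont
  | |- cont (fun x => dl1 ?j x) => apply L_dlcont
  | |- cont (fun x => hlin ?j x) => apply L_hcont
  | |- cont (fun x => x) => apply cont_id
  | |- cont (fun x => @?a x + @?b x) => apply (cont_plus a b)
  | |- cont (fun x => @?a x * @?b x) => apply (cont_mult a b)
  end.

Lemma L_l1der j t : derivable_pt_lim (l1 j) t (dl1 j t).
Proof.
  destruct (lag_derivable1 N tn j t) as [l Hl]. unfold dl1. rewrite (deriv_eq _ _ l); auto.
Qed.

Lemma L_dr_ell q r s t : (fst q < Ntri N)%nat -> d_r (ell q) r s t = dR (fst q) r s * l1 (snd q) t.
Proof. intros Hq. unfold d_r, ell. apply deriv_eq. apply dl_mulc. apply L_dR; auto. Qed.
Lemma L_ds_ell q r s t : (fst q < Ntri N)%nat -> d_s (ell q) r s t = dS (fst q) r s * l1 (snd q) t.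
Proof. intros Hq. unfold d_s, ell. apply deriv_eq. apply dl_mulc. apply L_dS; auto. Qed.
Lemma L_dt_ell q r s t : d_t (ell q) r s t = ltri (fst q) r s * dl1 (snd q) t.
Proof. unfold d_t, ell. apply deriv_eq. apply dl_cmul. apply L_l1der. Qed.

Definition Swf c (p q : nat * nat) r s t :=
  (gfac nu 0 c r s t * d_r (ell q) r s t + gfac nu 1 c r s t * d_s (ell q) r s t
   + gfac nu 2 c r s t * d_t (ell q) r s t) * ell p r s t * Jac nu r s t.
Definition Ap c (p q : nat * nat) r s := (rc c * dR (fst q) r s + sc c * dS (fst q) r s) * ltri (fst p) r s * Jf r s.
Definition Bp (p q : nat * nat) r s := ltri (fst q) r s * ltri (fst p) r s.

Lemma L_Sw_point c p q r s t : (c < 2)%nat -> (fst q < Ntri N)%nat -> inT r s -> 0 <= t <= 1 ->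
  Swf c p q r s t = Ap c p q r s * (l1 (snd q) t * l1 (snd p) t) + Bp p q r s * (hlin c t * dl1 (snd q) t * l1 (snd p) t).
Proof.
  intros Hc Hq [H1 [H2 H3]] Ht.
  assert (HW : in_W r s t) by (unfold in_W; lra).
  unfold Swf. rewrite L_dr_ell, L_ds_ell, L_dt_ell by auto.
  rewrite L_gfac0, L_gfac1 by auto.
  rewrite <- (L_gfac2 c r s t) by auto. rewrite L_Jac.
  unfold Ap, Bp, ell. ring.
Qed.

Definition IR i i' := intT (fun r s => dR i' r s * ltri i r s * Jf r s).
Definition IS i i' := intT (fun r s => dS i' r s * ltri i r s * Jf r s).
Definition Kc c j j' := RInt (fun t => hlin c t * dl1 j' t * l1 j t) 0 1.
Definition Mhat' i i' := intT (fun r s => ltri i r s * ltri i' r s).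

Lemma L_dRsep i : (i < Ntri N)%nat -> sep2 (dR i).
Proof. intros; apply (polyN_sep2 N), L_dR; auto. Qed.
Lemma L_dSsep i : (i < Ntri N)%nat -> sep2 (dS i).
Proof. intros; apply (polyN_sep2 N), L_dS; auto. Qed.

Lemma L_Sw c p q : (c < 2)%nat -> (fst p < Ntri N)%nat -> (fst q < Ntri N)%nat ->
  intW (Swf c p q) = M1 (snd q) (snd p) * (rc c * IR (fst p) (fst q) + sc c * IS (fst p) (fst q))
     + Kc c (snd p) (snd q) * Mhat' (fst p) (fst q).
Proof.
  intros Hc Hp Hq.
  assert (HA : sep2 (Ap c p q)).
  { unfold Ap. apply sep2_mult. apply sep2_mult. apply sep2_plus; apply sep2_scal.
    apply L_dRsep; auto. apply L_dSsep; auto. apply L_lsep; auto. apply L_Jsep. }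
  assert (HB : sep2 (Bp p q)). { unfold Bp. apply sep2_mult; apply L_lsep; auto. }
  change (intT (fun r s => Rint (fun t => Swf c p q r s t) 0 1) = M1 (snd q) (snd p) * (rc c * IR (fst p) (fst q) + sc c * IS (fst p) (fst q))
     + Kc c (snd p) (snd q) * Mhat' (fst p) (fst q)).
  rewrite (intT_ext_T _ (fun r s => M1 (snd q) (snd p) * Ap c p q r s + Kc c (snd p) (snd q) * Bp p q r s)).
  - rewrite intT_plus, intT_scal, intT_scal; auto; try (apply sep2_scal; auto).
    f_equal; f_equal.
    + unfold IR, IS. rewrite <- intT_scal, <- intT_scal, <- intT_plus.
      apply intT_ext; intros; unfold Ap; ring.
      apply sep2_scal. apply sep2_mult. apply sep2_mult. apply L_dRsep; auto. apply L_lsep; auto. apply L_Jsep.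
      apply sep2_scal. apply sep2_mult. apply sep2_mult. apply L_dSsep; auto. apply L_lsep; auto. apply L_Jsep.
      apply sep2_mult. apply sep2_mult. apply L_dSsep; auto. apply L_lsep; auto. apply L_Jsep.
      apply sep2_mult. apply sep2_mult. apply L_dRsep; auto. apply L_lsep; auto. apply L_Jsep.
    + unfold Mhat'. apply intT_ext; intros; unfold Bp; ring.
  - intros r s Hrs.
    rewrite (Rint_ext_on (fun t => Ap c p q r s * (l1 (snd q) t * l1 (snd p) t) + Bp p q r s * (hlin c t * dl1 (snd q) t * l1 (snd p) t))).
    rewrite RInt_plus', RInt_scal', RInt_scal'. unfold M1, Kc. ring.
    all: try (apply cont_ex; conttac).
    lra. intros t Ht. apply L_Sw_point; auto.
  - apply sep2_plus; apply sep2_scal; auto.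
Qed.

Lemma L_IR i i' : (i < Ntri N)%nat -> (i' < Ntri N)%nat ->
  IR i i' = msum (idx1 (Ntri N)) (fun k => Mtri' i k * dR i' (pr k) (ps k)).
Proof.
  intros Hi Hi'. unfold IR.
  rewrite (intT_ext _ (fun r s => msum (idx1 (Ntri N)) (fun k => dR i' (pr k) (ps k) * (ltri i r s * ltri k r s * Jf r s)))).
  - rewrite intT_msum. apply msum_ext; intros k Hk. rewrite intT_scal. unfold Mtri'. ring.
    apply sep2_mult. apply sep2_mult; apply L_lsep; auto. apply In_IT; auto. apply L_Jsep.
    intros k Hk. apply sep2_scal. apply sep2_mult. apply sep2_mult; apply L_lsep; auto. apply In_IT; auto. apply L_Jsep.
  - intros r s. rewrite (L_interp2 (dR i')). rewrite <- msum_scalr, <- msum_scalr. apply msum_ext; intros; ring.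
    apply L_dR; auto.
Qed.
Lemma L_IS i i' : (i < Ntri N)%nat -> (i' < Ntri N)%nat ->
  IS i i' = msum (idx1 (Ntri N)) (fun k => Mtri' i k * dS i' (pr k) (ps k)).
Proof.
  intros Hi Hi'. unfold IS.
  rewrite (intT_ext _ (fun r s => msum (idx1 (Ntri N)) (fun k => dS i' (pr k) (ps k) * (ltri i r s * ltri k r s * Jf r s)))).
  - rewrite intT_msum. apply msum_ext; intros k Hk. rewrite intT_scal. unfold Mtri'. ring.
    apply sep2_mult. apply sep2_mult; apply L_lsep; auto. apply In_IT; auto. apply L_Jsep.
    intros k Hk. apply sep2_scal. apply sep2_mult. apply sep2_mult; apply L_lsep; auto. apply In_IT; auto. apply L_Jsep.
  - intros r s. rewrite (L_interp2 (dS i')). rewrite <- msum_scalr, <- msum_scalr. apply msum_ext; intros; ring.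
    apply L_dS; auto.
Qed.

Lemma L_K c j j' : (j' <= N)%nat ->
  Kc c j j' = msum (idx1 (S N)) (fun k => M1 j k * (hlin c (tn k) * dl1 j' (tn k))).
Proof.
  intros Hj. unfold Kc.
  transitivity (RInt (fun t => msum (idx1 (S N)) (fun k => (hlin c (tn k) * dl1 j' (tn k)) * (l1 j t * l1 k t))) 0 1).
  - apply RInt_ext'. intros t _. rewrite (L_hlin_lin c t). unfold dl1.
    rewrite (interp_hderiv_std N tn (hlin c 0) (hlin c 1 - hlin c 0) j' L_inj Hj t).
    rewrite <- msum_scalr. apply msum_ext; intros k _. rewrite (L_hlin_lin c (tn k)). unfold l1. ring.
  - rewrite RInt_msum. apply msum_ext; intros k _. rewrite RInt_scal'. unfold M1. ring.
    all: try (apply cont_ex; conttac).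
    intros k _. apply cont_ex; conttac.
Qed.


Lemma In_IW p : In p (idx2 (Ntri N) (S N)) <-> (fst p < Ntri N)%nat /\ (snd p < S N)%nat.
Proof. destruct p as [a b]. unfold idx2. rewrite in_prod_iff. simpl. rewrite !in_seq. lia. Qed.

Lemma NoDup_IW : NoDup (idx2 (Ntri N) (S N)).
Proof. apply NoDup_prod; apply seq_NoDup. Qed.

Lemma msum_sep (X Y : nat -> R) :
  msum (idx2 (Ntri N) (S N)) (fun q => X (fst q) * Y (snd q)) = msum (idx1 (Ntri N)) X * msum (idx1 (S N)) Y.
Proof. unfold idx2, idx1. rewrite msum_mult. reflexivity. Qed.

Lemma idm_pair (p q : nat * nat) :
  idm pair_eq_dec p q = idm Nat.eq_dec (fst p) (fst q) * idm Nat.eq_dec (snd p) (snd q).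
Proof.
  destruct p as [a b], q as [a' b']. unfold idm; cbn [fst snd].
  destruct (Nat.eq_dec a a') as [->|na]; destruct (Nat.eq_dec b b') as [->|nb];
  match goal with |- context [pair_eq_dec ?x ?y] => destruct (pair_eq_dec x y) as [E|E] end;
  try ring; exfalso; try congruence; inversion E; congruence.
Qed.

Definition Mth p q := intW (fun r s t => ell p r s t * ell q r s t * Jac nu r s t).

Lemma L_Mth_inv BT B1 : is_inv (idx1 (Ntri N)) Nat.eq_dec Mtri' BT -> is_inv (idx1 (S N)) Nat.eq_dec M1 B1 ->
  is_inv (idx2 (Ntri N) (S N)) pair_eq_dec Mth (kron BT B1).
Proof.
  intros HT H1 p q Hp Hq.
  pose proof Hp as Hp'; pose proof Hq as Hq'.
  apply In_IW in Hp', Hq'.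
  assert (Hp1 : In (fst p) (idx1 (Ntri N))) by (apply In_IT; tauto).
  assert (Hq1 : In (fst q) (idx1 (Ntri N))) by (apply In_IT; tauto).
  assert (Hp2 : In (snd p) (idx1 (S N))) by (apply In_idx1; tauto).
  assert (Hq2 : In (snd q) (idx1 (S N))) by (apply In_idx1; tauto).
  rewrite idm_pair. unfold mmul. split.
  - destruct (HT _ _ Hp1 Hq1) as [E1 _]. destruct (H1 _ _ Hp2 Hq2) as [E2 _].
    unfold mmul in E1, E2. rewrite <- E1, <- E2.
    rewrite <- (msum_sep (fun a => Mtri' (fst p) a * BT a (fst q)) (fun b => M1 (snd p) b * B1 b (snd q))).
    apply msum_ext. intros q' Hq''. apply In_IW in Hq''. unfold Mth, kron. rewrite L_mass by tauto. ring.
  - destruct (HT _ _ Hp1 Hq1) as [_ E1]. destruct (H1 _ _ Hp2 Hq2) as [_ E2].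
    unfold mmul in E1, E2. rewrite <- E1, <- E2.
    rewrite <- (msum_sep (fun a => BT (fst p) a * Mtri' a (fst q)) (fun b => B1 (snd p) b * M1 b (snd q))).
    apply msum_ext. intros q' Hq''. apply In_IW in Hq''. unfold Mth, kron. rewrite L_mass by tauto. ring.
Qed.


Definition Mtri_th i i' := intT (fun r s => ltri i r s * ltri i' r s * Jac nu r s 0).
Definition diagtJ c j j' := if Nat.eq_dec j j' then gfac nu 2 c 0 0 (tn j) * Jac nu 0 0 (tn j) else 0.
Definition Dt j j' := deriv (l1 j') (tn j).
Definition Gm c i i' := gfac nu 0 c 0 0 0 * deriv (fun u => ltri i' u (ps i)) (pr i)
   + gfac nu 1 c 0 0 0 * deriv (fun u => ltri i' (pr i) u) (ps i).
Definition Ltri_th := mmul (idx1 (Ntri N)) (minv (idx1 (Ntri N)) Nat.eq_dec Mtri_th) Mhat'.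
Definition RHSm c p q := kron (Gm c) (idm Nat.eq_dec) p q
   + kron Ltri_th (mmul (idx1 (S N)) (diagtJ c) Dt) p q.

Lemma F_Mtri : Mtri_th = Mtri'.
Proof.
  apply functional_extensionality; intros i; apply functional_extensionality; intros k.
  unfold Mtri_th, Mtri'. apply intT_ext; intros; rewrite L_Jac; reflexivity.
Qed.

Lemma F_Ltri i i' : In i (idx1 (Ntri N)) ->
  msum (idx1 (Ntri N)) (fun a => Mtri' i a * Ltri_th a i') = Mhat' i i'.
Proof.
  intros Hi. destruct L_BT as [BT HBT].
  assert (Hm := minv_spec _ _ _ _ HBT).
  unfold Ltri_th. rewrite F_Mtri.
  change (mmul (idx1 (Ntri N)) Mtri' (mmul (idx1 (Ntri N)) (minv (idx1 (Ntri N)) Nat.eq_dec Mtri') Mhat') i i' = Mhat' i i').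
  rewrite <- mmul_assoc. unfold mmul at 1.
  rewrite (msum_ext _ _ (fun m => idm Nat.eq_dec i m * Mhat' m i')).
  apply (msum_delta Nat.eq_dec (idx1 (Ntri N)) i (fun m => Mhat' m i')). apply seq_NoDup. auto.
  intros m Hm'. f_equal. apply Hm; auto.
Qed.

Lemma F_E c b j' : (c < 2)%nat -> (b <= N)%nat ->
  mmul (idx1 (S N)) (diagtJ c) Dt b j' = hlin c (tn b) * dl1 j' (tn b).
Proof.
  intros Hc Hb. unfold mmul, diagtJ.
  rewrite (msum_ext _ _ (fun m => (if Nat.eq_dec b m then 1 else 0) * (hlin c (tn b) * dl1 j' (tn m)))).
  apply (msum_delta Nat.eq_dec (idx1 (S N)) b (fun m => hlin c (tn b) * dl1 j' (tn m))).
  apply seq_NoDup. apply In_idx1; lia.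
  intros m _. destruct (Nat.eq_dec b m) as [<-|]; [|ring].
  rewrite L_Jac, <- (L_gfac2 c 0 0 (tn b)); auto. unfold Dt, dl1, l1. ring.
  destruct (L_tn01 b Hb). unfold in_W; lra.
Qed.

Lemma F_G c a i' : (c < 2)%nat -> Gm c a i' = rc c * dR i' (pr a) (ps a) + sc c * dS i' (pr a) (ps a).
Proof.
  intros Hc. unfold Gm. rewrite L_gfac0, L_gfac1; auto; unfold in_W; lra.
Qed.

Lemma S6 c q' q : (c < 2)%nat -> In q' (idx2 (Ntri N) (S N)) -> In q (idx2 (Ntri N) (S N)) ->
  intW (Swf c q' q) = mmul (idx2 (Ntri N) (S N)) Mth (RHSm c) q' q.
Proof.
  intros Hc Hq' Hq. pose proof Hq' as [Hi Hj]%In_IW. pose proof Hq as [Hi' Hj']%In_IW.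
  rewrite L_Sw by auto. unfold mmul.
  rewrite (msum_ext _ _ (fun q'' => (Mtri' (fst q') (fst q'') * Gm c (fst q'') (fst q)) * (M1 (snd q') (snd q'') * idm Nat.eq_dec (snd q'') (snd q))
      + (Mtri' (fst q') (fst q'') * Ltri_th (fst q'') (fst q)) * (M1 (snd q') (snd q'') * mmul (idx1 (S N)) (diagtJ c) Dt (snd q'') (snd q)))).
  2:{ intros q'' Hq''. apply In_IW in Hq''. unfold Mth, RHSm, kron. rewrite L_mass by tauto. ring. }
  rewrite msum_plus.
  rewrite (msum_sep (fun a => Mtri' (fst q') a * Gm c a (fst q)) (fun b => M1 (snd q') b * idm Nat.eq_dec b (snd q))).
  rewrite (msum_sep (fun a => Mtri' (fst q') a * Ltri_th a (fst q)) (fun b => M1 (snd q') b * mmul (idx1 (S N)) (diagtJ c) Dt b (snd q))).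
  rewrite F_Ltri by (apply In_IT; auto).
  unfold idm. rewrite (msum_delta' Nat.eq_dec (idx1 (S N)) (snd q) (fun b => M1 (snd q') b)).
  2: apply seq_NoDup. 2: apply In_idx1; auto.
  rewrite (msum_ext _ (fun b => M1 (snd q') b * mmul (idx1 (S N)) (diagtJ c) Dt b (snd q))
             (fun b => M1 (snd q') b * (hlin c (tn b) * dl1 (snd q) (tn b)))).
  2:{ intros b Hb. apply In_idx1 in Hb. rewrite F_E; auto; lia. }
  rewrite <- L_K by lia.
  rewrite (msum_ext _ (fun a => Mtri' (fst q') a * Gm c a (fst q))
             (fun a => rc c * (Mtri' (fst q') a * dR (fst q) (pr a) (ps a)) + sc c * (Mtri' (fst q') a * dS (fst q) (pr a) (ps a)))).
  2:{ intros a _. rewrite F_G; auto. ring. }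
  rewrite msum_plus, msum_scal, msum_scal, <- L_IR, <- L_IS by auto.
  rewrite (L_M1sym (snd q) (snd q')). ring.
Qed.

Lemma main_c c : (c < 2)%nat -> forall p q, In p (idx2 (Ntri N) (S N)) -> In q (idx2 (Ntri N) (S N)) ->
  mmul (idx2 (Ntri N) (S N)) (minv (idx2 (Ntri N) (S N)) pair_eq_dec Mth) (fun p q => intW (Swf c p q)) p q = RHSm c p q.
Proof.
  intros Hc p q Hp Hq.
  destruct L_BT as [BT HBT]. destruct L_B1 as [B1 HB1].
  assert (Hm := minv_spec _ _ _ _ (L_Mth_inv BT B1 HBT HB1)).
  unfold mmul at 1.
  rewrite (msum_ext _ _ (fun q' => minv (idx2 (Ntri N) (S N)) pair_eq_dec Mth p q' * mmul (idx2 (Ntri N) (S N)) Mth (RHSm c) q' q)).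
  2:{ intros q' Hq'. rewrite S6; auto. }
  change (mmul (idx2 (Ntri N) (S N)) (minv (idx2 (Ntri N) (S N)) pair_eq_dec Mth) (mmul (idx2 (Ntri N) (S N)) Mth (RHSm c)) p q = RHSm c p q).
  rewrite <- mmul_assoc. unfold mmul at 1.
  rewrite (msum_ext _ _ (fun q'' => idm pair_eq_dec p q'' * RHSm c q'' q)).
  apply (msum_delta pair_eq_dec _ p (fun q'' => RHSm c q'' q)). apply NoDup_IW. auto.
  intros q'' Hq''. f_equal. apply Hm; auto.
Qed.

Lemma main_sec :
  let l1 := lag1D N tn in
  let ell := fun (p : nat * nat) (r s t : R) => ltri (fst p) r s * l1 (snd p) t in
  let J := Jac nu in
  let IW := idx2 (Ntri N) (S N) in
  let IT := idx1 (Ntri N) in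
  let I1 := idx1 (S N) in
  let M := fun p q => intW (fun r s t => ell p r s t * ell q r s t * J r s t) in
  (* d phi_q / d x_c (c = 0: x, c = 1: y) by the chain rule in reference coordinates *)
  let dphi := fun (c : nat) (q : nat * nat) (r s t : R) =>
      gfac nu 0 c r s t * d_r (ell q) r s t + gfac nu 1 c r s t * d_s (ell q) r s t
      + gfac nu 2 c r s t * d_t (ell q) r s t in
  let Sw := fun (c : nat) p q => intW (fun r s t => dphi c q r s t * ell p r s t * J r s t) in
  let Dk := fun (c : nat) => mmul IW (minv IW pair_eq_dec M) (Sw c) in
  let Mtri := fun i i' => intT (fun r s => ltri i r s * ltri i' r s * J r s 0) in
  let Mhat := fun i i' => intT (fun r s => ltri i r s * ltri i' r s) in
  let Dr := fun i i' => deriv (fun u => ltri i' u (ps i)) (pr i) in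
  let Ds := fun i i' => deriv (fun u => ltri i' (pr i) u) (ps i) in
  let Dt := fun j j' => deriv (l1 j') (tn j) in
  let Ltri := mmul IT (minv IT Nat.eq_dec Mtri) Mhat in
  (* diag(t_c J^k), entries evaluated at t = t_j (independent of r, s) *)
  let diagtJ := fun (c : nat) j j' =>
      if Nat.eq_dec j j' then gfac nu 2 c 0 0 (tn j) * J 0 0 (tn j) else 0 in
  (* right-hand side; the constant factors r_c, s_c are evaluated at the origin *)
  let RHS := fun (c : nat) p q =>
      kron (fun i i' => gfac nu 0 c 0 0 0 * Dr i i' + gfac nu 1 c 0 0 0 * Ds i i')
           (idm Nat.eq_dec) p q
      + kron Ltri (mmul I1 (diagtJ c) Dt) p q in
  forall p q, In p IW -> In q IW ->
    Dk 0%nat p q = RHS 0%nat p q /\ Dk 1%nat p q = RHS 1%nat p q.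
Proof.
  intros l1' ell' J IW IT I1 M dphi Sw Dk Mtri Mhat Dr Ds Dt' Ltri diagtJ' RHS p q Hp Hq.
  split.
  - exact (main_c 0 ltac:(lia) p q Hp Hq).
  - exact (main_c 1 ltac:(lia) p q Hp Hq).
Qed.

End Main.

Theorem mainTheorem5 (N : nat) (HN : (1 <= N)%nat)
  (nu : nat -> nat -> R) (Hvm : vertically_mapped nu)
  (HJ : forall r s t, in_W r s t -> 0 < Jac nu r s t)
  (pr ps : nat -> R) (ltri : nat -> R -> R -> R) (tn : nat -> R)
  (Hpts : forall i, (i < Ntri N)%nat -> 0 <= pr i /\ 0 <= ps i /\ pr i + ps i <= 1)
  (Huni : forall f, is_polyN N f ->
            (forall i, (i < Ntri N)%nat -> f (pr i) (ps i) = 0) -> forall r s, f r s = 0)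
  (Hlag : forall i, (i < Ntri N)%nat ->
            is_polyN N (ltri i) /\
            forall k, (k < Ntri N)%nat -> ltri i (pr k) (ps k) = if Nat.eq_dec i k then 1 else 0)
  (HGLL : is_GLL N tn) :
  let l1 := lag1D N tn in
  let ell := fun (p : nat * nat) (r s t : R) => ltri (fst p) r s * l1 (snd p) t in
  let J := Jac nu in
  let IW := idx2 (Ntri N) (S N) in
  let IT := idx1 (Ntri N) in
  let I1 := idx1 (S N) in
  (* mass matrix M^k *)
  let M := fun p q => intW (fun r s t => ell p r s t * ell q r s t * J r s t) in
  (* d phi_q / d x_c (c = 0: x, c = 1: y) by the chain rule in reference coordinates *)
  let dphi := fun (c : nat) (q : nat * nat) (r s t : R) =>
      gfac nu 0 c r s t * d_r (ell q) r s t + gfac nu 1 c r s t * d_s (ell q) r s t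
      + gfac nu 2 c r s t * d_t (ell q) r s t in
  (* weak differentiation matrices S^k_x, S^k_y *)
  let Sw := fun (c : nat) p q => intW (fun r s t => dphi c q r s t * ell p r s t * J r s t) in
  (* D^k_x, D^k_y *)
  let Dk := fun (c : nat) => mmul IW (minv IW pair_eq_dec M) (Sw c) in
  let Mtri := fun i i' => intT (fun r s => ltri i r s * ltri i' r s * J r s 0) in
  let Mhat := fun i i' => intT (fun r s => ltri i r s * ltri i' r s) in
  let Dr := fun i i' => deriv (fun u => ltri i' u (ps i)) (pr i) in
  let Ds := fun i i' => deriv (fun u => ltri i' (pr i) u) (ps i) in
  let Dt := fun j j' => deriv (l1 j') (tn j) in
  let Ltri := mmul IT (minv IT Nat.eq_dec Mtri) Mhat in
  (* diag(t_c J^k), entries evaluated at t = t_j (independent of r, s) *)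
  let diagtJ := fun (c : nat) j j' =>
      if Nat.eq_dec j j' then gfac nu 2 c 0 0 (tn j) * J 0 0 (tn j) else 0 in
  (* right-hand side; the constant factors r_c, s_c are evaluated at the origin *)
  let RHS := fun (c : nat) p q =>
      kron (fun i i' => gfac nu 0 c 0 0 0 * Dr i i' + gfac nu 1 c 0 0 0 * Ds i i')
           (idm Nat.eq_dec) p q
      + kron Ltri (mmul I1 (diagtJ c) Dt) p q in
  forall p q, In p IW -> In q IW ->
    Dk 0%nat p q = RHS 0%nat p q /\ Dk 1%nat p q = RHS 1%nat p q.
Proof.
  intros. eapply main_sec; eauto.
Qed.
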